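(* Let $K\subseteq\mathbb{R}^d$ be a compact connected set. Suppose that for every $x\in K$ there is $C_x>0$ such that for all $f\in C^1(K)$ and all $y\in K\setminus\{x\}$, $\frac{|f(y)-f(x)|}{|y-x|}\le C_x\|f\|_{C^1(K)}$. Then $K$ is pointwise Whitney regular.
   Context: $C^1(K)$ is the set of $f:K\to\mathbb{R}$ admitting a continuous $df:K\to\mathbb{R}^d$ with $\lim_{y\to x,\,y\in K\setminus\{x\}}\frac{f(y)-f(x)-\langle df(x),y-x\rangle}{|y-x|}=0$ for all $x\in K$, normed by $\|f\|_{C^1(K)}=\|f\|_K+\inf\{\|df\|_K: df \text{ a continuous derivative of } f\}$. $K$ is pointwise Whitney regular if for every $x\in K$ there are a neighbourhood $V_x$ of $x$ and $C_x>0$ such that every $y\in V_x\cap K$ is joined to $x$ by a rectifiable path in $K$ of length at most $C_x|x-y|$ (a rectifiable path is a continuous map $\gamma:[a,b]\to K$ of finite length $\sup\sum_j|\gamma(t_j)-\gamma(t_{j-1})|$). *)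

(* Defs.v *)
From Stdlib Require Import Reals Lra List Classical ClassicalEpsilon.
Open Scope R_scope.

(* Points of R^d: real sequences vanishing from index d on (so that
   coordinates 0..d-1 determine the point). *)
Definition Rd (d : nat) : Type :=
  { x : nat -> R | forall i, (d <= i)%nat -> x i = 0 }.

Definition coord {d : nat} (x : Rd d) (i : nat) : R := proj1_sig x i.

Fixpoint sumR (n : nat) (f : nat -> R) : R :=
  match n with
  | O => 0
  | S m => sumR m f + f m
  end.

Definition vnorm {d : nat} (x : Rd d) : R :=
  sqrt (sumR d (fun i => coord x i ^ 2)).
Definition distRd {d : nat} (x y : Rd d) : R :=
  sqrt (sumR d (fun i => (coord x i - coord y i) ^ 2)).
Definition inner_diff {d : nat} (v y x : Rd d) : R :=
  sumR d (fun i => coord v i * (coord y i - coord x i)).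

Definition open_set {d : nat} (V : Rd d -> Prop) : Prop :=
  forall x, V x -> exists r, r > 0 /\ forall y, distRd y x < r -> V y.

Definition compact_Rd {d : nat} (K : Rd d -> Prop) : Prop :=
  forall (I : Type) (U : I -> Rd d -> Prop),
    (forall i, open_set (U i)) ->
    (forall x, K x -> exists i, U i x) ->
    exists l : list I, forall x, K x -> exists i, In i l /\ U i x.

Definition connected_Rd {d : nat} (K : Rd d -> Prop) : Prop :=
  forall U V : Rd d -> Prop, open_set U -> open_set V ->
    (forall x, K x -> U x \/ V x) ->
    (forall x, K x -> U x -> V x -> False) ->
    (forall x, K x -> U x) \/ (forall x, K x -> V x).

(* supremum / infimum of a set of reals (meaningful when they exist) *)
Definition supr (E : R -> Prop) : R := epsilon (inhabits 0) (fun l => is_lub E l).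
Definition is_glb (E : R -> Prop) (l : R) : Prop :=
  (forall r, E r -> l <= r) /\ (forall m, (forall r, E r -> m <= r) -> m <= l).
Definition infr (E : R -> Prop) : R := epsilon (inhabits 0) (fun l => is_glb E l).

Definition supK {d : nat} (K : Rd d -> Prop) (g : Rd d -> R) : R :=
  supr (fun r => exists x, K x /\ r = g x).

(* df is a continuous derivative of f on K (Whitney-type C^1 on K) *)
Definition is_C1_deriv {d : nat} (K : Rd d -> Prop) (f : Rd d -> R)
    (df : Rd d -> Rd d) : Prop :=
  (forall x, K x -> forall eps, eps > 0 -> exists delta, delta > 0 /\
      forall y, K y -> distRd y x < delta -> distRd (df y) (df x) < eps) /\
  (forall x, K x -> forall eps, eps > 0 -> exists delta, delta > 0 /\
      forall y, K y -> y <> x -> distRd y x < delta ->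
        Rabs ((f y - f x - inner_diff (df x) y x) / distRd y x) < eps).

Definition C1_on {d : nat} (K : Rd d -> Prop) (f : Rd d -> R) : Prop :=
  exists df, is_C1_deriv K f df.

Definition C1norm {d : nat} (K : Rd d -> Prop) (f : Rd d -> R) : R :=
  supK K (fun x => Rabs (f x)) +
  infr (fun r => exists df, is_C1_deriv K f df /\ r = supK K (fun x => vnorm (df x))).

Definition path_in {d : nat} (K : Rd d -> Prop) (gamma : R -> Rd d) (a b : R) : Prop :=
  a <= b /\
  (forall t, a <= t <= b -> K (gamma t)) /\
  (forall t, a <= t <= b -> forall eps, eps > 0 -> exists delta, delta > 0 /\
     forall s, a <= s <= b -> Rabs (s - t) < delta -> distRd (gamma s) (gamma t) < eps).

Definition partition (a b : R) (n : nat) (t : nat -> R) : Prop :=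
  t O = a /\ t n = b /\ forall j, (j < n)%nat -> t j <= t (S j).

Definition poly_length {d : nat} (gamma : R -> Rd d) (n : nat) (t : nat -> R) : R :=
  sumR n (fun j => distRd (gamma (t (S j))) (gamma (t j))).

Definition partition_sums {d : nat} (gamma : R -> Rd d) (a b : R) (r : R) : Prop :=
  exists n t, partition a b n t /\ r = poly_length gamma n t.

Definition rectifiable {d : nat} (gamma : R -> Rd d) (a b : R) : Prop :=
  exists M, forall r, partition_sums gamma a b r -> r <= M.

Definition path_length {d : nat} (gamma : R -> Rd d) (a b : R) : R :=
  supr (partition_sums gamma a b).

Definition pointwise_Whitney_regular {d : nat} (K : Rd d -> Prop) : Prop :=
  forall x, K x -> exists (V : Rd d -> Prop) (C : R),
    open_set V /\ V x /\ C > 0 /\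
    forall y, V y -> K y ->
      exists (gamma : R -> Rd d) (a b : R),
        path_in K gamma a b /\ gamma a = x /\ gamma b = y /\
        rectifiable gamma a b /\ path_length gamma a b <= C * distRd x y.

(* Main.v *)
From Stdlib Require Import Reals Lra Lia ZArith List Classical ClassicalEpsilon
  FunctionalExtensionality ProofIrrelevance.
Require Import Defs.
Open Scope R_scope.

Lemma sumR_ext n f g : (forall i, (i < n)%nat -> f i = g i) -> sumR n f = sumR n g.
Proof. induction n; simpl; intros H; auto. rewrite IHn by (intros; apply H; lia). rewrite H by lia; auto. Qed.

Lemma sumR_plus n f g : sumR n (fun i => f i + g i) = sumR n f + sumR n g.
Proof. induction n; simpl; [lra|]. rewrite IHn; lra. Qed.

Lemma sumR_scal n c f : sumR n (fun i => c * f i) = c * sumR n f.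
Proof. induction n; simpl; [lra|]. rewrite IHn; lra. Qed.

Lemma sumR_le n f g : (forall i, (i < n)%nat -> f i <= g i) -> sumR n f <= sumR n g.
Proof. induction n; simpl; intros H; [lra|]. pose proof (H n ltac:(lia)). assert (sumR n f <= sumR n g) by (apply IHn; intros; apply H; lia). lra. Qed.

Lemma sumR_nonneg n f : (forall i, (i < n)%nat -> 0 <= f i) -> 0 <= sumR n f.
Proof. intros H. replace 0 with (sumR n (fun _ => 0)). apply sumR_le; auto.
  induction n; simpl; auto. rewrite IHn; [lra|]. intros; apply H; lia. Qed.

Lemma sumR_zero n : sumR n (fun _ => 0) = 0.
Proof. induction n; simpl; auto; rewrite IHn; lra. Qed.

Lemma sumR_abs n f : Rabs (sumR n f) <= sumR n (fun i => Rabs (f i)).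
Proof. induction n; simpl. rewrite Rabs_R0; lra.
  eapply Rle_trans. apply Rabs_triang. lra. Qed.

Lemma sumR_term_le n f i : (forall j, (j < n)%nat -> 0 <= f j) -> (i < n)%nat -> f i <= sumR n f.
Proof. induction n; intros H Hi; [lia|]. simpl. destruct (Nat.eq_dec i n).
  subst. assert (0 <= sumR n f) by (apply sumR_nonneg; intros; apply H; lia). lra.
  assert (f i <= sumR n f) by (apply IHn; [intros; apply H; lia| lia]). pose proof (H n ltac:(lia)). lra. Qed.

Definition nrm (n : nat) (a : nat -> R) : R := sqrt (sumR n (fun i => a i ^ 2)).

Lemma sumsq_nonneg n a : 0 <= sumR n (fun i => a i ^ 2).
Proof. apply sumR_nonneg; intros; nra. Qed.

Lemma nrm_nonneg n a : 0 <= nrm n a.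
Proof. apply sqrt_pos. Qed.

Lemma nrm_ext n a b : (forall i, (i < n)%nat -> a i = b i) -> nrm n a = nrm n b.
Proof. intros H; unfold nrm; f_equal; apply sumR_ext; intros; rewrite H; auto. Qed.

Lemma nrm_S n a : nrm (S n) a = sqrt (nrm n a ^ 2 + a n ^ 2).
Proof. unfold nrm; simpl sumR. f_equal. rewrite <- Rsqr_pow2, Rsqr_sqrt by apply sumsq_nonneg. auto. Qed.

Lemma cs2 a b c e : a * c + b * e <= sqrt (a ^ 2 + b ^ 2) * sqrt (c ^ 2 + e ^ 2).
Proof. pose proof (sqrt_cauchy a b c e). unfold Rsqr in *. replace (a^2) with (a*a) by ring.
  replace (b^2) with (b*b) by ring. replace (c^2) with (c*c) by ring. replace (e^2) with (e*e) by ring. auto. Qed.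

Lemma cs n a b : sumR n (fun i => a i * b i) <= nrm n a * nrm n b.
Proof. induction n. simpl. unfold nrm; simpl; rewrite sqrt_0; lra.
  rewrite !nrm_S. simpl sumR.
  eapply Rle_trans; [| apply cs2]. pose proof (nrm_nonneg n a). pose proof (nrm_nonneg n b). lra. Qed.

Lemma mink2 A B a b : 0 <= A -> 0 <= B ->
  sqrt ((A + B) ^ 2 + (a + b) ^ 2) <= sqrt (A ^ 2 + a ^ 2) + sqrt (B ^ 2 + b ^ 2).
Proof. intros HA HB. pose proof (cs2 A a B b).
  assert (h1: 0 <= sqrt (A ^ 2 + a ^ 2)) by apply sqrt_pos.
  assert (h2: 0 <= sqrt (B ^ 2 + b ^ 2)) by apply sqrt_pos.
  apply Rsqr_incr_0_var; [|lra]. rewrite Rsqr_sqrt by (pose proof (pow2_ge_0 (A+B)); pose proof (pow2_ge_0 (a+b)); lra). unfold Rsqr.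
  assert (e1 : sqrt (A ^ 2 + a ^ 2) * sqrt (A ^ 2 + a ^ 2) = A^2 + a^2) by (apply sqrt_sqrt; pose proof (pow2_ge_0 A); pose proof (pow2_ge_0 a); pose proof (pow2_ge_0 B); pose proof (pow2_ge_0 b); lra).
  assert (e2 : sqrt (B ^ 2 + b ^ 2) * sqrt (B ^ 2 + b ^ 2) = B^2 + b^2) by (apply sqrt_sqrt; pose proof (pow2_ge_0 A); pose proof (pow2_ge_0 a); pose proof (pow2_ge_0 B); pose proof (pow2_ge_0 b); lra).
  nra. Qed.

Lemma nrm_triangle n a b : nrm n (fun i => a i + b i) <= nrm n a + nrm n b.
Proof. induction n. unfold nrm; simpl; rewrite sqrt_0; lra.
  rewrite !nrm_S. eapply Rle_trans; [| apply mink2; apply nrm_nonneg].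
  apply sqrt_le_1_alt. pose proof (nrm_nonneg n (fun i => a i + b i)). nra. Qed.

Lemma nrm_scal n c a : nrm n (fun i => c * a i) = Rabs c * nrm n a.
Proof. unfold nrm. rewrite <- (sqrt_Rsqr (Rabs c)) by apply Rabs_pos. rewrite <- sqrt_mult by (try apply Rle_0_sqr; apply sumsq_nonneg).
  f_equal. rewrite <- sumR_scal. apply sumR_ext; intros. rewrite <- Rsqr_abs. unfold Rsqr. ring. Qed.

Lemma coord_le_nrm n a i : (i < n)%nat -> Rabs (a i) <= nrm n a.
Proof. intros H. unfold nrm. rewrite <- sqrt_Rsqr_abs. apply sqrt_le_1_alt.
  unfold Rsqr. replace (a i * a i) with (a i ^ 2) by ring. apply (sumR_term_le n (fun i => a i ^ 2)); auto. intros; nra. Qed.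

Lemma nrm_le_sum n a : nrm n a <= sumR n (fun i => Rabs (a i)).
Proof. induction n. unfold nrm; simpl; rewrite sqrt_0; lra.
  rewrite nrm_S. simpl sumR. apply Rsqr_incr_0_var.
  rewrite Rsqr_sqrt by (pose proof (nrm_nonneg n a); nra). unfold Rsqr.
  pose proof (nrm_nonneg n a). pose proof (Rabs_pos (a n)). 
  assert (a n ^ 2 = Rabs (a n) * Rabs (a n)) by (rewrite <- Rabs_mult; rewrite Rabs_right; nra).
  nra. apply Rplus_le_le_0_compat. apply sumR_nonneg; intros; apply Rabs_pos. apply Rabs_pos. Qed.

Lemma nrm_zero_iff n a : nrm n a = 0 -> forall i, (i < n)%nat -> a i = 0.
Proof. intros H i Hi. pose proof (coord_le_nrm n a i Hi). rewrite H in H0. pose proof (Rabs_pos (a i)).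
  destruct (Req_dec (a i) 0); auto. pose proof (Rabs_pos_lt (a i) H2). lra. Qed.

Lemma mkv_proof (d : nat) (f : nat -> R) : forall i, (d <= i)%nat -> (fun i => if Nat.ltb i d then f i else 0) i = 0.
Proof. intros i H. simpl. destruct (Nat.ltb_spec i d); auto. lia. Qed.

Definition mkv (d : nat) (f : nat -> R) : Rd d := exist _ _ (mkv_proof d f).

Lemma coord_mkv d f i : (i < d)%nat -> coord (mkv d f) i = f i.
Proof. intros H. unfold coord, mkv; simpl. destruct (Nat.ltb_spec i d); auto; lia. Qed.

Lemma Rd_eq d (x y : Rd d) : (forall i, (i < d)%nat -> coord x i = coord y i) -> x = y.
Proof. destruct x as [x hx], y as [y hy]. unfold coord; simpl. intros H.
  assert (x = y). { apply functional_extensionality. intros i. destruct (Nat.lt_ge_cases i d).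
    apply H; auto. rewrite hx, hy; auto. } subst. f_equal. apply proof_irrelevance. Qed.

Lemma dist_nrm d (x y : Rd d) : distRd x y = nrm d (fun i => coord x i - coord y i).
Proof. reflexivity. Qed.

Lemma dist_nonneg d (x y : Rd d) : 0 <= distRd x y.
Proof. apply sqrt_pos. Qed.

Lemma dist_sym d (x y : Rd d) : distRd x y = distRd y x.
Proof. rewrite !dist_nrm. replace (nrm d (fun i => coord x i - coord y i)) with (nrm d (fun i => (-1) * (coord y i - coord x i))).
  rewrite nrm_scal. replace (Rabs (-1)) with 1 by (rewrite Rabs_left; lra); ring. apply nrm_ext; intros; ring. Qed.

Lemma dist_tri d (x y z : Rd d) : distRd x z <= distRd x y + distRd y z.
Proof. rewrite !dist_nrm. eapply Rle_trans; [|apply nrm_triangle]. right. apply nrm_ext; intros; ring. Qed.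

Lemma dist_refl d (x : Rd d) : distRd x x = 0.
Proof. rewrite dist_nrm. unfold nrm. rewrite <- sqrt_0. f_equal. rewrite <- (sumR_zero d). apply sumR_ext; intros; ring. Qed.

Lemma dist_coord d (x y : Rd d) i : (i < d)%nat -> Rabs (coord x i - coord y i) <= distRd x y.
Proof. intros; rewrite dist_nrm; apply (coord_le_nrm d (fun i => coord x i - coord y i)); auto. Qed.

Lemma dist_le_sum d (x y : Rd d) : distRd x y <= sumR d (fun i => Rabs (coord x i - coord y i)).
Proof. rewrite dist_nrm; apply nrm_le_sum. Qed.

Lemma dist0_eq d (x y : Rd d) : distRd x y = 0 -> x = y.
Proof. intros H. apply Rd_eq. intros i Hi. rewrite dist_nrm in H. pose proof (nrm_zero_iff _ _ H i Hi). simpl in H0. lra. Qed.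

Lemma dist_pos_neq d (x y : Rd d) : x <> y -> 0 < distRd x y.
Proof. intros H. destruct (dist_nonneg d x y); auto. exfalso; apply H; apply dist0_eq; auto. Qed.

Lemma ball_open d (c : Rd d) (r : R) : open_set (fun (y : Rd d) => distRd y c < r).
Proof. intros x Hx. exists (r - distRd x c). split. lra. intros y Hy. pose proof (dist_tri d y x c). lra. Qed.

Lemma inner_cs d (v y x : Rd d) : Rabs (inner_diff v y x) <= vnorm v * distRd y x.
Proof. unfold inner_diff. apply Rabs_le. split.
  - assert (- sumR d (fun i => coord v i * (coord y i - coord x i)) <= vnorm v * distRd y x); [|lra].
    replace (- sumR d (fun i => coord v i * (coord y i - coord x i))) with
      (sumR d (fun i => (-1 * coord v i) * (coord y i - coord x i))).
    eapply Rle_trans. apply (cs d (fun i => -1 * coord v i) (fun i => coord y i - coord x i)).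
    rewrite nrm_scal. replace (Rabs (-1)) with 1 by (rewrite Rabs_left; lra). right; unfold vnorm, nrm. rewrite Rmult_1_l. reflexivity.
    replace (fun i => (-1 * coord v i) * (coord y i - coord x i)) with (fun i => -1 * (coord v i * (coord y i - coord x i))).
    rewrite sumR_scal; ring. apply functional_extensionality; intros; ring.
  - apply (cs d (coord v) (fun i => coord y i - coord x i)). Qed.
Lemma list_bound {A : Type} (l : list A) (f : A -> nat) : exists M, forall a, In a l -> (f a <= M)%nat.
Proof. induction l as [|a l IH]. exists 0%nat; simpl; tauto. destruct IH as [M HM].
  exists (Nat.max (f a) M). intros b [<-|Hb]. lia. specialize (HM b Hb). lia. Qed.

Lemma archi_nat (e : R) : e > 0 -> exists n : nat, / INR (S n) < e.
Proof. intros He. destruct (archimed (/ e)) as [H1 _].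
  assert (0 < / e) by (apply Rinv_0_lt_compat; lra).
  assert (0 < IZR (up (/ e))) by lra.
  exists (Z.to_nat (up (/ e))). rewrite S_INR, INR_IZR_INZ, Z2Nat.id.
  2:{ apply le_IZR. lra. }
  apply Rlt_trans with (/ IZR (up (/ e))).
  apply Rinv_lt_contravar. apply Rmult_lt_0_compat; lra. lra. assert (/ IZR (up (/ e)) < / / e) by (apply Rinv_lt_contravar; [apply Rmult_lt_0_compat|]; lra).
  rewrite Rinv_inv in H2. lra. Qed.

Lemma compact_cluster d (K : Rd d -> Prop) (hK : compact_Rd K) (m : nat -> Rd d) :
  (forall n, K (m n)) -> exists c, K c /\ forall del, del > 0 -> forall N, exists n, (N <= n)%nat /\ distRd (m n) c < del.
Proof. intros Hm. apply NNPP. intros Hno.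
  set (I := {c : Rd d & {del : R & {N : nat | del > 0 /\ forall n, (N <= n)%nat -> distRd (m n) c >= del}}}).
  set (U := fun (i : I) (y : Rd d) => distRd y (projT1 i) < projT1 (projT2 i)).
  destruct (hK I U) as [l Hl].
  - intros i; apply ball_open.
  - intros w Kw. assert (exists del, del > 0 /\ exists N, forall n, (N <= n)%nat -> distRd (m n) w >= del).
    { apply NNPP; intros H. apply Hno. exists w; split; auto. intros del Hdel N.
      apply NNPP; intros H2. apply H. exists del; split; auto. exists N. intros n Hn.
      apply Rnot_lt_ge. intros H3. apply H2. exists n; auto. }
    destruct H as [del [Hdel [N HN]]].
    exists (existT _ w (existT _ del (exist _ N (conj Hdel HN)))). unfold U; simpl. rewrite dist_refl; lra.
  - destruct (list_bound l (fun i => proj1_sig (projT2 (projT2 i)))) as [M HM].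
    destruct (Hl (m M) (Hm M)) as [i [Hi Ui]].
    specialize (HM _ Hi). clear Hi. destruct i as [c [del [N [Hdel HN]]]]. unfold U in Ui; simpl in *.
    specialize (HN M HM). lra. Qed.

Lemma compact_closed d (K : Rd d -> Prop) (hK : compact_Rd K) (p : Rd d) :
  (forall del, del > 0 -> exists w, K w /\ distRd w p < del) -> K p.
Proof. intros H. apply NNPP. intros Hp.
  destruct (hK nat (fun n y => distRd y p > / INR (S n))) as [l Hl].
  - intros n x Hx. exists (distRd x p - / INR (S n)). split. lra. intros y Hy.
    pose proof (dist_tri d x y p). rewrite (dist_sym d x y) in H0. lra.
  - intros w Kw. assert (w <> p) by (intros ->; auto).
    pose proof (dist_pos_neq d w p H0). destruct (archi_nat _ H1) as [n Hn]. exists n. lra.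
  - destruct (list_bound l (fun n => n)) as [M HM].
    assert (/ INR (S M) > 0) by (apply Rinv_0_lt_compat; apply lt_0_INR; lia).
    destruct (H _ H0) as [w [Kw Hw]]. destruct (Hl w Kw) as [n [Hn Un]].
    specialize (HM n Hn). assert (/ INR (S M) <= / INR (S n)).
    { apply Rinv_le_contravar. apply lt_0_INR; lia. apply le_INR; lia. } lra. Qed.

Lemma compact_bounded d (K : Rd d -> Prop) (hK : compact_Rd K) (x : Rd d) :
  exists M, forall w, K w -> distRd w x <= M.
Proof. destruct (hK nat (fun n y => distRd y x < INR n)) as [l Hl].
  - intros n; apply ball_open.
  - intros w _. destruct (archimed (distRd w x)) as [H1 _].
    exists (Z.to_nat (up (distRd w x))). rewrite INR_IZR_INZ, Z2Nat.id. lra.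
    apply le_IZR. pose proof (dist_nonneg d w x). lra.
  - destruct (list_bound l (fun n => n)) as [M HM]. exists (INR M). intros w Kw.
    destruct (Hl w Kw) as [n [Hn Un]]. specialize (HM n Hn). apply le_INR in HM. lra. Qed.

Lemma compact_net d (K : Rd d -> Prop) (hK : compact_Rd K) (eta : R) : eta > 0 ->
  exists l : list (Rd d), (forall p, In p l -> K p) /\ forall w, K w -> exists p, In p l /\ distRd w p < eta.
Proof. intros He. destruct (hK {c : Rd d | K c} (fun i y => distRd y (proj1_sig i) < eta)) as [l Hl].
  - intros i; apply ball_open.
  - intros w Kw. exists (exist _ w Kw). simpl. rewrite dist_refl; lra.
  - exists (map (@proj1_sig _ _) l). split.
    + intros p Hp. apply in_map_iff in Hp. destruct Hp as [[c Kc] [<- _]]. auto.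
    + intros w Kw. destruct (Hl w Kw) as [i [Hi Ui]]. exists (proj1_sig i). split; auto. apply in_map; auto. Qed.
Fixpoint chainP {d} (K : Rd d -> Prop) (s : R) (u : Rd d) (l : list (Rd d)) (v : Rd d) : Prop :=
  match l with
  | nil => distRd u v < s
  | w :: l' => K w /\ distRd u w < s /\ chainP K s w l' v
  end.

Fixpoint clen {d} (u : Rd d) (l : list (Rd d)) (v : Rd d) : R :=
  match l with
  | nil => distRd u v
  | w :: l' => distRd u w + clen w l' v
  end.

Lemma chain_cat d (K : Rd d -> Prop) s u l1 m l2 v :
  chainP K s u l1 m -> K m -> chainP K s m l2 v -> chainP K s u (l1 ++ m :: l2) v.
Proof. revert u; induction l1 as [|w l1 IH]; simpl; intros u H1 Km H2. tauto.
  destruct H1 as [? [? ?]]. split; auto. Qed.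

Lemma clen_cat d (u : Rd d) l1 m l2 v : clen u (l1 ++ m :: l2) v = clen u l1 m + clen m l2 v.
Proof. revert u; induction l1 as [|w l1 IH]; simpl; intros u. auto. rewrite IH; ring. Qed.

Lemma chain_mono d (K : Rd d -> Prop) s s' u l v : s <= s' -> chainP K s u l v -> chainP K s' u l v.
Proof. intros Hs; revert u; induction l as [|w l IH]; simpl; intros u H. lra. destruct H as [? [? ?]]. repeat split; auto. lra. Qed.

Lemma clen_ge_dist d (u : Rd d) l v : distRd u v <= clen u l v.
Proof. revert u; induction l as [|w l IH]; simpl; intros u. lra. pose proof (IH w). pose proof (dist_tri d u w v). lra. Qed.

Lemma chain_split d (K : Rd d -> Prop) s u l v : s > 0 -> K u -> K v -> chainP K s u l v ->
  forall h, 0 <= h <= clen u l v -> exists l1 m l2, K m /\ chainP K s u l1 m /\ chainP K s m l2 v /\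
    clen u l1 m <= h /\ clen m l2 v <= clen u l v - h + s.
Proof. intros Hs. revert u; induction l as [|w l IH]; simpl; intros u Ku Kv Hc h Hh.
  - destruct (Rlt_le_dec h (distRd u v)).
    + exists nil, u, nil. simpl. rewrite dist_refl. repeat split; auto; lra.
    + exists nil, v, nil. simpl. rewrite dist_refl. repeat split; auto; lra.
  - destruct Hc as [Kw [Huw Hc]]. destruct (Rlt_le_dec h (distRd u w)).
    + exists nil, u, (w :: l). simpl. rewrite dist_refl. repeat split; auto; lra.
    + destruct (IH w Kw Kv Hc (h - distRd u w)) as [l1 [m [l2 [Km [H1 [H2 [H3 H4]]]]]]]. lra.
      exists (w :: l1), m, l2. simpl. repeat split; auto; lra. Qed.

Lemma chain_exists d (K : Rd d -> Prop) (hconn : connected_Rd K) x s : K x -> s > 0 ->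
  forall v, K v -> exists l, chainP K s x l v.
Proof. intros Kx Hs.
  set (Rch := fun w => K w /\ exists l, chainP K s x l w).
  destruct (hconn (fun y => exists k, Rch k /\ distRd y k < s / 2)
                  (fun y => exists r, r > 0 /\ forall k, Rch k -> distRd y k >= r + s / 2)) as [H|H].
  - intros y [k [Rk Hk]]. exists (s/2 - distRd y k). split. lra. intros y' Hy'. exists k; split; auto.
    pose proof (dist_tri d y' y k). lra.
  - intros y [r [Hr Hk]]. exists (r/2). split. lra. intros y' Hy'. exists (r/2). split. lra.
    intros k Rk. specialize (Hk k Rk). pose proof (dist_tri d y y' k). rewrite (dist_sym d y y') in H. lra.
  - intros w Kw. destruct (classic (exists l, chainP K s x l w)) as [Hw|Hw].
    + left. exists w. split. split; auto. rewrite dist_refl; lra.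
    + right. exists (s/2). split. lra. intros k [Kk [l Hl]]. apply Rnot_lt_ge. intros Hlt. apply Hw.
      exists (l ++ k :: nil). apply chain_cat; auto. simpl. rewrite dist_sym. lra.
  - intros w Kw [k [Rk Hk]] [r [Hr Hr2]]. specialize (Hr2 k Rk). lra.
  - intros v Kv. destruct (H v Kv) as [k [[Kk [l Hl]] Hk]].
    exists (l ++ k :: nil). apply chain_cat; auto. simpl. rewrite dist_sym. lra.
  - exfalso. destruct (H x Kx) as [r [Hr Hr2]]. assert (Rch x). { split; auto. exists nil. simpl. rewrite dist_refl; lra. }
    specialize (Hr2 x H0). rewrite dist_refl in Hr2. lra. Qed.

Definition reach {d} (K : Rd d -> Prop) (u v : Rd d) (L : R) : Prop :=
  forall s, s > 0 -> exists l, chainP K s u l v /\ clen u l v <= L + s.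

Lemma reach_dist d (K : Rd d -> Prop) u v L : reach K u v L -> distRd u v <= L.
Proof. intros H. apply Rnot_lt_le. intros Hlt. destruct (H ((distRd u v - L)/2)) as [l [_ Hl]]. lra.
  pose proof (clen_ge_dist d u l v). lra. Qed.

Lemma midpoint d (K : Rd d -> Prop) (hK : compact_Rd K) u v L : K u -> K v -> 0 <= L -> reach K u v L ->
  exists m, K m /\ reach K u m (L/2) /\ reach K m v (L/2).
Proof. intros Ku Kv HL Hr.
  assert (Hseq : forall n : nat, exists m, K m /\ exists l1 l2, chainP K (/ INR (S n)) u l1 m /\ chainP K (/ INR (S n)) m l2 v
     /\ clen u l1 m <= L/2 /\ clen m l2 v <= L/2 + 2 * / INR (S n)).
  { intros n. assert (Hsn : / INR (S n) > 0) by (apply Rinv_0_lt_compat; apply lt_0_INR; lia).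
    destruct (Hr _ Hsn) as [l [Hl Hlen]].
    pose proof (clen_ge_dist d u l v). pose proof (dist_nonneg d u v).
    destruct (chain_split d K _ u l v Hsn Ku Kv Hl (Rmin (L/2) (clen u l v))) as [l1 [m [l2 [Km [H1 [H2 [H3 H4]]]]]]].
    split. apply Rmin_glb; lra. apply Rmin_r.
    exists m; split; auto. exists l1, l2. repeat split; auto. pose proof (Rmin_l (L/2) (clen u l v)). lra.
    unfold Rmin in H4. destruct (Rle_dec (L/2) (clen u l v)); lra. }
  destruct (choice _ Hseq) as [ms Hms].
  destruct (compact_cluster d K hK ms (fun n => proj1 (Hms n))) as [c [Kc Hc]].
  exists c. split; auto. split.
  - intros s Hs. destruct (archi_nat (s/4)) as [N HN]. lra.
    destruct (Hc (s/4) ltac:(lra) N) as [n [Hn Hd]].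
    destruct (Hms n) as [Km [l1 [l2 [H1 [H2 [H3 H4]]]]]].
    assert (/ INR (S n) <= / INR (S N)). { apply Rinv_le_contravar. apply lt_0_INR; lia. apply le_INR; lia. }
    exists (l1 ++ ms n :: nil). split.
    + apply chain_cat; auto. apply chain_mono with (/ INR (S n)); auto. lra. simpl. lra.
    + rewrite clen_cat. simpl. lra.
  - intros s Hs. destruct (archi_nat (s/4)) as [N HN]. lra.
    destruct (Hc (s/4) ltac:(lra) N) as [n [Hn Hd]].
    destruct (Hms n) as [Km [l1 [l2 [H1 [H2 [H3 H4]]]]]].
    assert (/ INR (S n) <= / INR (S N)). { apply Rinv_le_contravar. apply lt_0_INR; lia. apply le_INR; lia. }
    exists (ms n :: l2). split.
    + simpl. rewrite dist_sym. repeat split; auto. lra. apply chain_mono with (/ INR (S n)); auto. lra.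
    + simpl. rewrite dist_sym. lra. Qed.
Lemma pow2_pos n : 0 < 2 ^ n.
Proof. apply pow_lt; lra. Qed.

Lemma pow2_ge n : INR (S n) <= 2 ^ n.
Proof. induction n. simpl; lra. rewrite !S_INR. simpl pow. rewrite S_INR in IHn. pose proof (pos_INR n). lra. Qed.

Lemma small_pow2 c e : 0 <= c -> e > 0 -> exists n, c / 2 ^ n < e.
Proof. intros Hc He. destruct (archi_nat (e / (c + 1))) as [n Hn].
  apply Rdiv_lt_0_compat; lra. exists n.
  pose proof (pow2_ge n). pose proof (lt_0_INR (S n) ltac:(lia)).
  assert (c / 2 ^ n <= c * / INR (S n)).
  { unfold Rdiv. apply Rmult_le_compat_l; auto. apply Rinv_le_contravar; lra. }
  assert (c * / INR (S n) <= c * (e / (c + 1))) by (apply Rmult_le_compat_l; lra).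
  assert (c * (e / (c + 1)) < e). { unfold Rdiv. rewrite <- Rmult_assoc.
    apply Rlt_le_trans with ((c + 1) * e * / (c + 1)). apply Rmult_lt_compat_r.
    apply Rinv_0_lt_compat; lra. nra. right; field; lra. }
  lra. Qed.

Lemma small_pow2_mono c n m : 0 <= c -> (n <= m)%nat -> c / 2 ^ m <= c / 2 ^ n.
Proof. intros Hc Hnm. unfold Rdiv. apply Rmult_le_compat_l; auto. apply Rinv_le_contravar. apply pow2_pos.
  apply Rle_pow; auto. lra. Qed.

Lemma le_lim_pow2 a b c : 0 <= c -> (forall n, a <= b + c / 2 ^ n) -> a <= b.
Proof. intros Hc H. apply Rnot_lt_le. intros Hlt. destruct (small_pow2 c (a - b)) as [n Hn]; auto. lra.
  specialize (H n). lra. Qed.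

Definition limR (u : nat -> R) : R := epsilon (inhabits 0) (fun l => Un_cv u l).

Lemma limR_spec u : Cauchy_crit u -> Un_cv u (limR u).
Proof. intros H. destruct (R_complete u H) as [l Hl]. unfold limR. apply epsilon_spec. exists l; auto. Qed.

Lemma limR_bound u n B : Un_cv u (limR u) -> (forall m, (n <= m)%nat -> Rabs (u m - u n) <= B) -> Rabs (limR u - u n) <= B.
Proof. intros Hl H. apply Rnot_lt_le. intros Hlt. destruct (Hl (Rabs (limR u - u n) - B)) as [N HN]. lra.
  specialize (HN (Nat.max N n) ltac:(lia)). specialize (H (Nat.max N n) ltac:(lia)). unfold R_dist in HN.
  pose proof (Rabs_triang (limR u - u (Nat.max N n)) (u (Nat.max N n) - u n)).
  replace (limR u - u (Nat.max N n) + (u (Nat.max N n) - u n)) with (limR u - u n) in H0 by ring.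
  rewrite Rabs_minus_sym in HN. lra. Qed.

Definition Mid {d} (K : Rd d -> Prop) (u v : Rd d) (L : R) : Rd d :=
  epsilon (inhabits u) (fun m => K m /\ reach K u m (L/2) /\ reach K m v (L/2)).

Lemma Mid_spec d (K : Rd d -> Prop) (hK : compact_Rd K) u v L : K u -> K v -> 0 <= L -> reach K u v L ->
  K (Mid K u v L) /\ reach K u (Mid K u v L) (L/2) /\ reach K (Mid K u v L) v (L/2).
Proof. intros. unfold Mid. apply epsilon_spec. apply midpoint; auto. Qed.

Fixpoint Gd {d} (K : Rd d -> Prop) (x z : Rd d) (L : R) (n k : nat) : Rd d :=
  match n with
  | O => match k with O => x | _ => z end
  | S n' => if Nat.even k then Gd K x z L n' (Nat.div2 k)
            else Mid K (Gd K x z L n' (Nat.div2 k)) (Gd K x z L n' (S (Nat.div2 k))) (L / 2 ^ n')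
  end.

Lemma Gd_S d K (x z : Rd d) L n k : Gd K x z L (S n) k = if Nat.even k then Gd K x z L n (Nat.div2 k)
            else Mid K (Gd K x z L n (Nat.div2 k)) (Gd K x z L n (S (Nat.div2 k))) (L / 2 ^ n).
Proof. reflexivity. Qed.

Lemma Gd_even d K (x z : Rd d) L n j : Gd K x z L (S n) (2 * j) = Gd K x z L n j.
Proof. rewrite Gd_S. rewrite Nat.even_even, Nat.div2_double. auto. Qed.

Lemma Gd_odd d K (x z : Rd d) L n j : Gd K x z L (S n) (S (2 * j)) = Mid K (Gd K x z L n j) (Gd K x z L n (S j)) (L / 2 ^ n).
Proof. rewrite Gd_S. replace (S (2 * j)) with (2 * j + 1)%nat by lia. rewrite Nat.even_odd, Nat.div2_odd'. auto. Qed.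

Lemma G_inv d (K : Rd d -> Prop) (hK : compact_Rd K) x z L : K x -> K z -> 0 <= L -> reach K x z L ->
  forall n k, (k < 2 ^ n)%nat -> K (Gd K x z L n k) /\ K (Gd K x z L n (S k)) /\ reach K (Gd K x z L n k) (Gd K x z L n (S k)) (L / 2 ^ n).
Proof. intros Kx Kz HL Hr n. induction n; intros k Hk.
  - simpl in Hk. assert (k = 0%nat) by lia. subst. simpl. replace (L / 1) with L by field. auto.
  - assert (HL2 : 0 <= L / 2 ^ n) by (unfold Rdiv; apply Rmult_le_pos; auto; left; apply Rinv_0_lt_compat, pow2_pos).
    assert (E : L / 2 ^ S n = L / 2 ^ n / 2) by (simpl; field; pose proof (pow2_pos n); lra).
    destruct (Nat.Even_or_Odd k) as [[j Hj]|[j Hj]]; subst k.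
    + assert (j < 2 ^ n)%nat by (simpl in Hk; lia). destruct (IHn j H) as [K1 [K2 R1]].
      rewrite Gd_even, Gd_odd. destruct (Mid_spec d K hK _ _ _ K1 K2 HL2 R1) as [? [? ?]].
      rewrite E. auto.
    + assert (j < 2 ^ n)%nat by (simpl in Hk; lia). destruct (IHn j H) as [K1 [K2 R1]].
      replace (2 * j + 1)%nat with (S (2 * j)) by lia. replace (S (S (2 * j))) with (2 * S j)%nat by lia.
      rewrite Gd_even, Gd_odd. destruct (Mid_spec d K hK _ _ _ K1 K2 HL2 R1) as [? [? ?]].
      rewrite E. auto. Qed.

Lemma Gd_zero d K (x z : Rd d) L n : Gd K x z L n 0 = x.
Proof. induction n; auto. Qed.

Lemma Gd_last d K (x z : Rd d) L n : Gd K x z L n (2 ^ n) = z.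
Proof. induction n; auto. simpl Nat.pow. replace (2 ^ n + (2 ^ n + 0))%nat with (2 * 2 ^ n)%nat by lia. rewrite Gd_even. auto. Qed.

Lemma G_grid d (K : Rd d -> Prop) (hK : compact_Rd K) x z L : K x -> K z -> 0 <= L -> reach K x z L ->
  forall n j k, (j <= k)%nat -> (k <= 2 ^ n)%nat -> distRd (Gd K x z L n j) (Gd K x z L n k) <= L / 2 ^ n * INR (k - j).
Proof. intros Kx Kz HL Hr n j k Hjk. induction k; intros Hk.
  - assert (j = 0%nat) by lia. subst. rewrite dist_refl. simpl. lra.
  - destruct (Nat.eq_dec j (S k)). subst. rewrite dist_refl, Nat.sub_diag. simpl; lra.
    assert (IH : distRd (Gd K x z L n j) (Gd K x z L n k) <= L / 2 ^ n * INR (k - j)) by (apply IHk; lia).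
    destruct (G_inv d K hK x z L Kx Kz HL Hr n k ltac:(lia)) as [_ [_ Rk]].
    pose proof (reach_dist _ _ _ _ _ Rk). pose proof (dist_tri d (Gd K x z L n j) (Gd K x z L n k) (Gd K x z L n (S k))).
    replace (S k - j)%nat with (S (k - j)) by lia. rewrite S_INR. lra. Qed.

Lemma G_grid_abs d (K : Rd d -> Prop) (hK : compact_Rd K) x z L : K x -> K z -> 0 <= L -> reach K x z L ->
  forall n j k, (j <= 2 ^ n)%nat -> (k <= 2 ^ n)%nat -> distRd (Gd K x z L n j) (Gd K x z L n k) <= L / 2 ^ n * Rabs (INR j - INR k).
Proof. intros Kx Kz HL Hr n j k Hj Hk. destruct (Nat.le_ge_cases j k).
  - replace (Rabs (INR j - INR k)) with (INR (k - j)). apply G_grid; auto.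
    rewrite minus_INR by auto. rewrite Rabs_left1. ring. pose proof (le_INR _ _ H). lra.
  - rewrite dist_sym. replace (Rabs (INR j - INR k)) with (INR (j - k)). apply G_grid; auto.
    rewrite minus_INR by auto. rewrite Rabs_right. ring. pose proof (le_INR _ _ H). lra. Qed.

Fixpoint kseq (t : R) (n : nat) : nat :=
  match n with
  | O => O
  | S n' => if Rle_dec (INR (2 * kseq t n' + 1)) (t * 2 ^ S n') then (2 * kseq t n' + 1)%nat else (2 * kseq t n')%nat
  end.

Lemma kseq_lt t n : (kseq t n < 2 ^ n)%nat.
Proof. induction n; simpl. lia. destruct (Rle_dec _ _); lia. Qed.

Lemma kseq_bounds t n : 0 <= t <= 1 -> INR (kseq t n) <= t * 2 ^ n <= INR (kseq t n) + 1.
Proof. intros Ht. induction n. simpl; lra.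
  simpl kseq. set (k := kseq t n) in *. 
  assert (E1 : INR (2 * k + 1) = 2 * INR k + 1) by (rewrite plus_INR, mult_INR; simpl; ring).
  assert (E2 : INR (2 * k) = 2 * INR k) by (rewrite mult_INR; simpl; ring).
  assert (E3 : t * 2 ^ S n = 2 * (t * 2 ^ n)) by (simpl; ring).
  assert (E4 : t * (2 * 2 ^ n) = 2 * (t * 2 ^ n)) by ring.
  replace (k + (k + 0) + 1)%nat with (2 * k + 1)%nat by lia. replace (k + (k + 0))%nat with (2 * k)%nat by lia.
  destruct (Rle_dec _ _) as [H|H]; rewrite ?E1, ?E2, ?E3, ?E4 in *; lra. Qed.

Lemma kseq_zero n : kseq 0 n = 0%nat.
Proof. induction n; simpl; auto. rewrite IHn. destruct (Rle_dec _ _) as [H|H]; auto. simpl in H. lra. Qed.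
Definition Pn {d} (K : Rd d -> Prop) x z L n t : Rd d := Gd K x z L n (kseq t n).
Definition gam {d} (K : Rd d -> Prop) x z L (t : R) : Rd d := mkv d (fun i => limR (fun n => coord (Pn K x z L n t) i)).

Lemma sumR_const n c : sumR n (fun _ => c) = INR n * c.
Proof. induction n; simpl sumR. simpl; ring. rewrite IHn, S_INR; ring. Qed.


Lemma P_step d (K : Rd d -> Prop) (hK : compact_Rd K) x z L : K x -> K z -> 0 <= L -> reach K x z L ->
  forall n t, distRd (Pn K x z L n t) (Pn K x z L (S n) t) <= L / 2 ^ S n.
Proof. intros Kx Kz HL Hr n t. unfold Pn. simpl kseq. set (k := kseq t n).
  pose proof (kseq_lt t n). fold k in H.
  destruct (Rle_dec _ _).
  - replace (k + (k + 0) + 1)%nat with (S (2 * k)) by lia.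
    rewrite <- (Gd_even d K x z L n k).
    destruct (G_inv d K hK x z L Kx Kz HL Hr (S n) (2 * k)) as [_ [_ R1]]. simpl; lia.
    apply reach_dist in R1. auto.
  - replace (k + (k + 0))%nat with (2 * k)%nat by lia. rewrite Gd_even. rewrite dist_refl.
    apply Rmult_le_pos; auto. left; apply Rinv_0_lt_compat, pow2_pos. Qed.

Lemma P_far d (K : Rd d -> Prop) (hK : compact_Rd K) x z L : K x -> K z -> 0 <= L -> reach K x z L ->
  forall n m t, (n <= m)%nat -> distRd (Pn K x z L n t) (Pn K x z L m t) <= L / 2 ^ n - L / 2 ^ m.
Proof. intros Kx Kz HL Hr n m t Hnm. induction m.
  - assert (n = 0%nat) by lia. subst. rewrite dist_refl. lra.
  - destruct (Nat.eq_dec n (S m)). subst. rewrite dist_refl. lra.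
    specialize (IHm ltac:(lia)). pose proof (P_step d K hK x z L Kx Kz HL Hr m t).
    pose proof (dist_tri d (Pn K x z L n t) (Pn K x z L m t) (Pn K x z L (S m) t)).
    assert (L / 2 ^ S m = L / 2 ^ m - L / 2 ^ S m) by (simpl; field; pose proof (pow2_pos m); lra). lra. Qed.

Lemma P_far' d (K : Rd d -> Prop) (hK : compact_Rd K) x z L : K x -> K z -> 0 <= L -> reach K x z L ->
  forall n m t, (n <= m)%nat -> distRd (Pn K x z L m t) (Pn K x z L n t) <= L / 2 ^ n.
Proof. intros. rewrite dist_sym. pose proof (P_far d K hK x z L H H0 H1 H2 n m t H3).
  assert (0 <= L / 2 ^ m) by (apply Rmult_le_pos; auto; left; apply Rinv_0_lt_compat, pow2_pos). lra. Qed.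

Lemma P_cauchy d (K : Rd d -> Prop) (hK : compact_Rd K) x z L : K x -> K z -> 0 <= L -> reach K x z L ->
  forall t i, (i < d)%nat -> Cauchy_crit (fun n => coord (Pn K x z L n t) i).
Proof. intros Kx Kz HL Hr t i Hi eps He. destruct (small_pow2 L (eps/2)) as [N HN]; auto. lra.
  exists N. intros n m Hn Hm. unfold R_dist.
  pose proof (dist_coord d _ _ i Hi : Rabs (coord (Pn K x z L n t) i - coord (Pn K x z L N t) i) <= _).
  pose proof (dist_coord d (Pn K x z L m t) (Pn K x z L N t) i Hi).
  pose proof (P_far' d K hK x z L Kx Kz HL Hr N n t Hn). pose proof (P_far' d K hK x z L Kx Kz HL Hr N m t Hm).
  pose proof (Rabs_triang (coord (Pn K x z L n t) i - coord (Pn K x z L N t) i) (coord (Pn K x z L N t) i - coord (Pn K x z L m t) i)).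
  replace (coord (Pn K x z L n t) i - coord (Pn K x z L N t) i + (coord (Pn K x z L N t) i - coord (Pn K x z L m t) i)) with
     (coord (Pn K x z L n t) i - coord (Pn K x z L m t) i) in H3 by ring.
  rewrite (Rabs_minus_sym (coord (Pn K x z L N t) i)) in H3. lra. Qed.

Lemma gam_close d (K : Rd d -> Prop) (hK : compact_Rd K) x z L : K x -> K z -> 0 <= L -> reach K x z L ->
  forall n t, distRd (gam K x z L t) (Pn K x z L n t) <= INR d * (L / 2 ^ n).
Proof. intros Kx Kz HL Hr n t. eapply Rle_trans. apply dist_le_sum. rewrite <- sumR_const. apply sumR_le.
  intros i Hi. unfold gam. rewrite coord_mkv by auto.
  apply (limR_bound (fun m => coord (Pn K x z L m t) i) n (L / 2 ^ n)). apply limR_spec. apply P_cauchy; auto.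
  intros m Hm. simpl. eapply Rle_trans. apply (dist_coord d (Pn K x z L m t) (Pn K x z L n t) i Hi).
  apply P_far'; auto. Qed.

Lemma gam_lip d (K : Rd d -> Prop) (hK : compact_Rd K) x z L : K x -> K z -> 0 <= L -> reach K x z L ->
  forall s t, 0 <= s <= 1 -> 0 <= t <= 1 -> distRd (gam K x z L s) (gam K x z L t) <= L * Rabs (s - t).
Proof. intros Kx Kz HL Hr s t Hs Ht. apply (le_lim_pow2 _ _ ((2 * INR d + 1) * L)).
  pose proof (pos_INR d). nra.
  intros n. pose proof (gam_close d K hK x z L Kx Kz HL Hr n s). pose proof (gam_close d K hK x z L Kx Kz HL Hr n t).
  pose proof (dist_tri d (gam K x z L s) (Pn K x z L n s) (gam K x z L t)).
  pose proof (dist_tri d (Pn K x z L n s) (Pn K x z L n t) (gam K x z L t)).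
  rewrite (dist_sym d (Pn K x z L n t) (gam K x z L t)) in H2.
  assert (distRd (Pn K x z L n s) (Pn K x z L n t) <= L / 2 ^ n * Rabs (INR (kseq s n) - INR (kseq t n))).
  { unfold Pn. apply G_grid_abs; auto; pose proof (kseq_lt s n); pose proof (kseq_lt t n); lia. }
  pose proof (kseq_bounds s n Hs). pose proof (kseq_bounds t n Ht). pose proof (pow2_pos n).
  assert (H8 : Rabs (INR (kseq s n) - INR (kseq t n)) <= Rabs (s - t) * 2 ^ n + 1).
  { assert (H8 : Rabs (s - t) * 2 ^ n = Rabs (s * 2 ^ n - t * 2 ^ n)).
    { replace (s * 2 ^ n - t * 2 ^ n) with ((s - t) * 2 ^ n) by ring. rewrite Rabs_mult. rewrite (Rabs_right (2 ^ n)); lra. }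
    rewrite H8. unfold Rabs. repeat destruct Rcase_abs; lra. }
  assert (L / 2 ^ n * Rabs (INR (kseq s n) - INR (kseq t n)) <= L * Rabs (s - t) + L / 2 ^ n).
  { eapply Rle_trans. apply Rmult_le_compat_l. apply Rmult_le_pos; auto; left; apply Rinv_0_lt_compat; auto. apply H8.
    right. field. lra. }
  assert ((2 * INR d + 1) * L / 2 ^ n = 2 * (INR d * (L / 2 ^ n)) + L / 2 ^ n) by (field; lra). lra. Qed.

Lemma gam_0 d (K : Rd d -> Prop) x z L : gam K x z L 0 = x.
Proof. apply Rd_eq. intros i Hi. unfold gam. rewrite coord_mkv by auto.
  unfold Pn. assert (forall n, coord (Gd K x z L n (kseq 0 n)) i = coord x i).
  { intros n. rewrite kseq_zero, Gd_zero. auto. }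
  apply UL_sequence with (fun n => coord (Gd K x z L n (kseq 0 n)) i).
  apply limR_spec. intros e He. exists 0%nat. intros n m _ _. rewrite !H. unfold R_dist. rewrite Rminus_diag, Rabs_R0. lra.
  intros e He. exists 0%nat. intros n _. rewrite H. unfold R_dist. rewrite Rminus_diag, Rabs_R0. lra. Qed.

Lemma dist_small_eq d (a b : Rd d) c : 0 <= c -> (forall n, distRd a b <= c / 2 ^ n) -> a = b.
Proof. intros Hc H. apply dist0_eq. apply Rle_antisym. apply (le_lim_pow2 _ _ c); auto. intros n; rewrite Rplus_0_l; auto.
  apply dist_nonneg. Qed.

Lemma gam_1 d (K : Rd d -> Prop) (hK : compact_Rd K) x z L : K x -> K z -> 0 <= L -> reach K x z L -> gam K x z L 1 = z.
Proof. intros Kx Kz HL Hr. apply (dist_small_eq d _ _ ((INR d + 1) * L)). pose proof (pos_INR d); nra.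
  intros n. pose proof (gam_close d K hK x z L Kx Kz HL Hr n 1).
  assert (distRd (Pn K x z L n 1) z <= L / 2 ^ n).
  { unfold Pn. rewrite <- (Gd_last d K x z L n) at 2. eapply Rle_trans. apply G_grid_abs; auto.
    pose proof (kseq_lt 1 n); lia. rewrite <- (Rmult_1_r (L / 2 ^ n)) at 2. apply Rmult_le_compat_l.
    apply Rmult_le_pos; auto; left; apply Rinv_0_lt_compat, pow2_pos.
    pose proof (kseq_bounds 1 n ltac:(lra)). rewrite pow_INR. replace (INR 2) with 2 by (simpl; ring).
    rewrite Rabs_left1; lra. }
  pose proof (dist_tri d (gam K x z L 1) (Pn K x z L n 1) z).
  assert ((INR d + 1) * L / 2 ^ n = INR d * (L / 2 ^ n) + L / 2 ^ n) by (field; pose proof (pow2_pos n); lra). lra. Qed.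

Lemma gam_K d (K : Rd d -> Prop) (hK : compact_Rd K) x z L : K x -> K z -> 0 <= L -> reach K x z L ->
  forall t, K (gam K x z L t).
Proof. intros Kx Kz HL Hr t. apply compact_closed; auto. intros del Hdel.
  destruct (small_pow2 (INR d * L) del) as [n Hn]; auto. pose proof (pos_INR d); nra.
  exists (Pn K x z L n t). split.
  - unfold Pn. destruct (G_inv d K hK x z L Kx Kz HL Hr n (kseq t n) (kseq_lt t n)) as [? _]. auto.
  - rewrite dist_sym. pose proof (gam_close d K hK x z L Kx Kz HL Hr n t).
    assert (INR d * L / 2 ^ n = INR d * (L / 2 ^ n)) by (field; pose proof (pow2_pos n); lra). lra. Qed.
Lemma supr_le (E : R -> Prop) M : (exists r, E r) -> (forall r, E r -> r <= M) -> supr E <= M.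
Proof. intros Hne Hb. assert (Hl : is_lub E (supr E)).
  { unfold supr. apply epsilon_spec. destruct (completeness E) as [m Hm]. exists M; intros r Hr; auto. auto. exists m; auto. }
  apply Hl. intros r Hr; auto. Qed.

Lemma supr_ge (E : R -> Prop) M r : (exists r, E r) -> (forall r, E r -> r <= M) -> E r -> r <= supr E.
Proof. intros Hne Hb Hr. assert (Hl : is_lub E (supr E)).
  { unfold supr. apply epsilon_spec. destruct (completeness E) as [m Hm]. exists M; intros r' Hr'; auto. auto. exists m; auto. }
  apply Hl; auto. Qed.

Lemma part_mono a b n (t : nat -> R) : partition a b n t -> forall j k, (j <= k)%nat -> (k <= n)%nat -> t j <= t k.
Proof. intros [_ [_ H]] j k Hjk. induction k; intros Hk.
  - assert (j = 0%nat) by lia; subst; lra.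
  - destruct (Nat.eq_dec j (S k)). subst; lra. specialize (IHk ltac:(lia) ltac:(lia)). pose proof (H k ltac:(lia)). lra. Qed.

Lemma reach_path d (K : Rd d -> Prop) (hK : compact_Rd K) x z L : K x -> K z -> 0 <= L -> reach K x z L ->
  exists (gamma : R -> Rd d) (a b : R), path_in K gamma a b /\ gamma a = x /\ gamma b = z /\
    rectifiable gamma a b /\ path_length gamma a b <= L.
Proof. intros Kx Kz HL Hr. set (g := gam K x z L).
  assert (Hlip := gam_lip d K hK x z L Kx Kz HL Hr). fold g in Hlip.
  assert (Hsum : forall n t, partition 0 1 n t -> poly_length g n t <= L).
  { intros n t Hp. pose proof (part_mono _ _ _ _ Hp) as Hm. destruct Hp as [H0 [H1 H2]].
    assert (forall m, (m <= n)%nat -> sumR m (fun j => distRd (g (t (S j))) (g (t j))) <= L * (t m - t 0%nat)).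
    { induction m; intros Hmn. simpl. lra. simpl sumR. specialize (IHm ltac:(lia)).
      assert (H3 : 0 <= t m <= 1) by (split; [rewrite <- H0; apply Hm | rewrite <- H1; apply Hm]; lia).
      assert (H4 : 0 <= t (S m) <= 1) by (split; [rewrite <- H0; apply Hm | rewrite <- H1; apply Hm]; lia).
      pose proof (Hlip (t (S m)) (t m) H4 H3). pose proof (H2 m ltac:(lia)).
      rewrite Rabs_right in H by lra. nra. }
    unfold poly_length. specialize (H n (le_n n)). rewrite H0, H1 in H. lra. }
  assert (Hne : exists r, partition_sums g 0 1 r).
  { exists (poly_length g 1 (fun j => match j with O => 0 | _ => 1 end)). exists 1%nat, (fun j => match j with O => 0 | _ => 1 end).
    split; auto. repeat split; auto. intros j Hj. assert (j = 0%nat) by lia. subst. lra. }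
  exists g, 0, 1. split; [|split; [|split; [|split]]].
  - split. lra. split. intros; apply gam_K; auto.
    intros t Ht eps He. exists (eps / (L + 1)). split. apply Rdiv_lt_0_compat; lra.
    intros s Hs Hst. eapply Rle_lt_trans. apply Hlip; auto.
    apply Rle_lt_trans with ((L + 1) * Rabs (s - t)). pose proof (Rabs_pos (s - t)); nra.
    apply Rmult_lt_reg_r with (/ (L + 1)). apply Rinv_0_lt_compat; lra.
    replace ((L + 1) * Rabs (s - t) * / (L + 1)) with (Rabs (s - t)) by (field; lra). auto.
  - apply gam_0.
  - apply gam_1; auto.
  - exists L. intros r [n [t [Hp ->]]]. apply Hsum; auto.
  - unfold path_length. apply supr_le; auto. intros r [n [t [Hp ->]]]. apply Hsum; auto. Qed.
Definition hasg {d} (F : Rd d -> R) (g : nat -> R) (w : Rd d) : Prop :=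
  forall e, e > 0 -> exists del, del > 0 /\ forall y, distRd y w < del ->
    Rabs (F y - F w - sumR d (fun i => g i * (coord y i - coord w i))) <= e * distRd y w.

Definition contR {d} (F : Rd d -> R) (w : Rd d) : Prop :=
  forall e, e > 0 -> exists del, del > 0 /\ forall y, distRd y w < del -> Rabs (F y - F w) < e.

Lemma abs_cs n a b : Rabs (sumR n (fun i => a i * b i)) <= nrm n a * nrm n b.
Proof. apply Rabs_le. split.
  - replace (- (nrm n a * nrm n b)) with (- (nrm n (fun i => -1 * a i) * nrm n b)).
    assert (sumR n (fun i => (-1 * a i) * b i) <= nrm n (fun i => -1 * a i) * nrm n b) by apply cs.
    replace (sumR n (fun i => (-1 * a i) * b i)) with (- sumR n (fun i => a i * b i)) in H. lra.
    replace (fun i => (-1 * a i) * b i) with (fun i => -1 * (a i * b i)). rewrite sumR_scal; ring.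
    apply functional_extensionality; intros; ring.
    rewrite nrm_scal. replace (Rabs (-1)) with 1 by (rewrite Rabs_left; lra). ring.
  - apply cs. Qed.

Lemma lin_bound d (g : nat -> R) (y w : Rd d) : Rabs (sumR d (fun i => g i * (coord y i - coord w i))) <= nrm d g * distRd y w.
Proof. rewrite dist_nrm. apply abs_cs. Qed.

Lemma hasg_lip d (F : Rd d -> R) g w : hasg F g w -> exists del, del > 0 /\ forall y, distRd y w < del -> Rabs (F y - F w) <= (nrm d g + 1) * distRd y w.
Proof. intros H. destruct (H 1 ltac:(lra)) as [del [Hdel Hd]]. exists del; split; auto. intros y Hy.
  specialize (Hd y Hy). pose proof (lin_bound d g y w).
  pose proof (Rabs_triang (F y - F w - sumR d (fun i => g i * (coord y i - coord w i))) (sumR d (fun i => g i * (coord y i - coord w i)))).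
  replace (F y - F w - sumR d (fun i => g i * (coord y i - coord w i)) + sumR d (fun i => g i * (coord y i - coord w i))) with (F y - F w) in H1 by ring.
  lra. Qed.

Lemma hasg_cont d (F : Rd d -> R) g w : hasg F g w -> contR F w.
Proof. intros H e He. destruct (hasg_lip d F g w H) as [del [Hdel Hd]].
  pose proof (nrm_nonneg d g).
  exists (Rmin del (e / (nrm d g + 2))). split. apply Rmin_pos; auto. apply Rdiv_lt_0_compat; lra.
  intros y Hy. assert (distRd y w < del) by (eapply Rlt_le_trans; [apply Hy| apply Rmin_l]).
  specialize (Hd y H1). assert (distRd y w < e / (nrm d g + 2)) by (eapply Rlt_le_trans; [apply Hy| apply Rmin_r]).
  pose proof (dist_nonneg d y w).
  assert ((nrm d g + 1) * distRd y w < e).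
  { apply Rle_lt_trans with ((nrm d g + 2) * distRd y w). nra.
    apply Rmult_lt_reg_r with (/ (nrm d g + 2)). apply Rinv_0_lt_compat; lra.
    replace ((nrm d g + 2) * distRd y w * / (nrm d g + 2)) with (distRd y w) by (field; lra). auto. }
  lra. Qed.

Lemma hasg_ext d (F F' : Rd d -> R) g g' w : (forall y, F y = F' y) -> (forall i, (i < d)%nat -> g i = g' i) -> hasg F g w -> hasg F' g' w.
Proof. intros HF Hg H e He. destruct (H e He) as [del [Hdel Hd]]. exists del; split; auto. intros y Hy.
  rewrite <- !HF. replace (sumR d (fun i => g' i * (coord y i - coord w i))) with (sumR d (fun i => g i * (coord y i - coord w i))).
  auto. apply sumR_ext; intros; rewrite Hg; auto. Qed.

Lemma hasg_const d (c : R) (w : Rd d) : hasg (fun _ => c) (fun _ => 0) w.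
Proof. intros e He. exists 1; split. lra. intros y _. replace (c - c - sumR d (fun i => 0 * (coord y i - coord w i))) with 0.
  rewrite Rabs_R0. pose proof (dist_nonneg d y w). nra.
  rewrite (sumR_ext d _ (fun _ => 0)) by (intros; ring). rewrite sumR_zero; ring. Qed.

Lemma hasg_plus d (F G : Rd d -> R) g h w : hasg F g w -> hasg G h w -> hasg (fun y => F y + G y) (fun i => g i + h i) w.
Proof. intros H1 H2 e He. destruct (H1 (e/2) ltac:(lra)) as [d1 [Hd1 P1]]. destruct (H2 (e/2) ltac:(lra)) as [d2 [Hd2 P2]].
  exists (Rmin d1 d2). split. apply Rmin_pos; auto. intros y Hy.
  specialize (P1 y (Rlt_le_trans _ _ _ Hy (Rmin_l _ _))). specialize (P2 y (Rlt_le_trans _ _ _ Hy (Rmin_r _ _))).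
  replace (sumR d (fun i => (g i + h i) * (coord y i - coord w i))) with
    (sumR d (fun i => g i * (coord y i - coord w i)) + sumR d (fun i => h i * (coord y i - coord w i))).
  match goal with |- Rabs ?X <= _ => replace X with ((F y - F w - sumR d (fun i => g i * (coord y i - coord w i))) + (G y - G w - sumR d (fun i => h i * (coord y i - coord w i)))) by ring end.
  eapply Rle_trans. apply Rabs_triang. lra.
  rewrite <- sumR_plus. apply sumR_ext; intros; ring. Qed.

Definition sumL {A : Type} (l : list A) (F : A -> R) : R := fold_right (fun p acc => F p + acc) 0 l.

Lemma hasg_sumL d {A : Type} (l : list A) (F : A -> Rd d -> R) (g : A -> nat -> R) w :
  (forall p, In p l -> hasg (F p) (g p) w) -> hasg (fun y => sumL l (fun p => F p y)) (fun i => sumL l (fun p => g p i)) w.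
Proof. induction l as [|p l IH]; intros H; simpl.
  - apply hasg_const.
  - apply (hasg_plus d (F p) (fun y => sumL l (fun p => F p y)) (g p) (fun i => sumL l (fun p => g p i))).
    apply H; simpl; auto. apply IH. intros; apply H; simpl; auto. Qed.

Lemma sumR_minus n f g : sumR n f - sumR n g = sumR n (fun i => f i - g i).
Proof. induction n; simpl; [ring|]. rewrite <- IHn; ring. Qed.

Definition sqd {d} (y p : Rd d) : R := sumR d (fun i => (coord y i - coord p i) ^ 2).

Lemma sqd_dist d (y p : Rd d) : sqd y p = distRd y p ^ 2.
Proof. unfold sqd, distRd. rewrite <- Rsqr_pow2, Rsqr_sqrt. auto. apply sumsq_nonneg. Qed.

Lemma hasg_sqd d (p w : Rd d) : hasg (fun y => sqd y p) (fun i => 2 * (coord w i - coord p i)) w.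
Proof. intros e He. exists e; split; auto. intros y Hy.
  replace (sqd y p - sqd w p - sumR d (fun i => 2 * (coord w i - coord p i) * (coord y i - coord w i))) with (sqd y w).
  rewrite sqd_dist. pose proof (dist_nonneg d y w). rewrite Rabs_right by nra. nra.
  unfold sqd. rewrite !sumR_minus. apply sumR_ext; intros; ring.
Qed.

Lemma hasg_comp d (F : Rd d -> R) g w (phi : R -> R) l : derivable_pt_lim phi (F w) l -> hasg F g w ->
  hasg (fun y => phi (F y)) (fun i => l * g i) w.
Proof. intros Hphi HF e He.
  destruct (hasg_lip d F g w HF) as [d1 [Hd1 Lip]]. set (G := nrm d g + 1). assert (HG : G > 0) by (pose proof (nrm_nonneg d g); unfold G; lra).
  destruct (Hphi (e / (2 * G))) as [[d2 Hd2] Hp]. apply Rdiv_lt_0_compat; lra. simpl in Hp.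
  destruct (HF (e / (2 * (Rabs l + 1)))) as [d3 [Hd3 P3]]. apply Rdiv_lt_0_compat; [lra| pose proof (Rabs_pos l); lra].
  exists (Rmin d1 (Rmin (d2 / G) d3)). split. repeat apply Rmin_pos; auto. apply Rdiv_lt_0_compat; auto.
  intros y Hy. assert (y1 : distRd y w < d1) by (eapply Rlt_le_trans; [apply Hy|apply Rmin_l]).
  assert (y2 : distRd y w < d2 / G) by (eapply Rlt_le_trans; [apply Hy|]; eapply Rle_trans; [apply Rmin_r|apply Rmin_l]).
  assert (y3 : distRd y w < d3) by (eapply Rlt_le_trans; [apply Hy|]; eapply Rle_trans; [apply Rmin_r|apply Rmin_r]).
  specialize (Lip y y1). specialize (P3 y y3). pose proof (dist_nonneg d y w) as Hdn.
  set (h := F y - F w) in *. set (Ssum := sumR d (fun i => g i * (coord y i - coord w i))) in *.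
  assert (A1 : Rabs (phi (F y) - phi (F w) - l * h) <= e / (2 * G) * Rabs h).
  { destruct (Req_dec h 0) as [h0|h0].
    - replace (F y) with (F w) by (unfold h in h0; lra). rewrite h0. rewrite Rmult_0_r, Rabs_R0. unfold Rminus. rewrite Rplus_opp_r, Rplus_0_l, Ropp_0, Rabs_R0. lra.
    - assert (Rabs h < d2). { apply Rle_lt_trans with (G * distRd y w). unfold G; auto.
        apply Rmult_lt_reg_r with (/ G). apply Rinv_0_lt_compat; lra.
        replace (G * distRd y w * / G) with (distRd y w) by (field; lra). apply y2. }
      specialize (Hp h h0 H). replace (F w + h) with (F y) in Hp by (unfold h; ring).
      replace (phi (F y) - phi (F w) - l * h) with (((phi (F y) - phi (F w)) / h - l) * h) by (field; auto).
      rewrite Rabs_mult. apply Rmult_le_compat_r. apply Rabs_pos. lra. }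
  replace (sumR d (fun i => l * g i * (coord y i - coord w i))) with (l * Ssum).
  2:{ unfold Ssum. rewrite <- sumR_scal. apply sumR_ext; intros; ring. }
  replace (phi (F y) - phi (F w) - l * Ssum) with ((phi (F y) - phi (F w) - l * h) + l * (h - Ssum)) by ring.
  eapply Rle_trans. apply Rabs_triang. rewrite Rabs_mult.
  assert (B1 : e / (2 * G) * Rabs h <= e / 2 * distRd y w).
  { apply Rle_trans with (e / (2 * G) * (G * distRd y w)). apply Rmult_le_compat_l; auto. left; apply Rdiv_lt_0_compat; lra.
    right; field; lra. }
  assert (B2 : Rabs l * Rabs (h - Ssum) <= e / 2 * distRd y w).
  { apply Rle_trans with (Rabs l * (e / (2 * (Rabs l + 1)) * distRd y w)). apply Rmult_le_compat_l; auto. apply Rabs_pos.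
    pose proof (Rabs_pos l). apply Rle_trans with ((Rabs l / (Rabs l + 1)) * (e / 2 * distRd y w)). right; field; lra.
    rewrite <- (Rmult_1_l (e / 2 * distRd y w)) at 2. apply Rmult_le_compat_r. nra.
    apply Rmult_le_reg_r with (Rabs l + 1). lra. replace (Rabs l / (Rabs l + 1) * (Rabs l + 1)) with (Rabs l) by (field; lra). lra. }
  lra. Qed.

Lemma derivable_affine (al be t : R) : derivable_pt_lim (fun t => al + be * t) t be.
Proof. intros e He. exists (mkposreal 1 Rlt_0_1). intros h Hh _. 
  replace ((al + be * (t + h) - (al + be * t)) / h - be) with 0 by (field; auto). rewrite Rabs_R0; auto. Qed.
Lemma contR_const d (c : R) (w : Rd d) : contR (fun _ => c) w.
Proof. intros e He. exists 1. split. lra. intros. rewrite Rminus_diag, Rabs_R0. auto. Qed.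

Lemma contR_coord d i (w : Rd d) : (i < d)%nat -> contR (fun y => coord y i) w.
Proof. intros Hi e He. exists e; split; auto. intros y Hy. eapply Rle_lt_trans. apply dist_coord; auto. auto. Qed.

Lemma contR_plus d (F G : Rd d -> R) w : contR F w -> contR G w -> contR (fun y => F y + G y) w.
Proof. intros H1 H2 e He. destruct (H1 (e/2) ltac:(lra)) as [d1 [Hd1 P1]]. destruct (H2 (e/2) ltac:(lra)) as [d2 [Hd2 P2]].
  exists (Rmin d1 d2). split. apply Rmin_pos; auto. intros y Hy.
  specialize (P1 y (Rlt_le_trans _ _ _ Hy (Rmin_l _ _))). specialize (P2 y (Rlt_le_trans _ _ _ Hy (Rmin_r _ _))).
  replace (F y + G y - (F w + G w)) with ((F y - F w) + (G y - G w)) by ring.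
  eapply Rle_lt_trans. apply Rabs_triang. lra. Qed.

Lemma contR_mult d (F G : Rd d -> R) w : contR F w -> contR G w -> contR (fun y => F y * G y) w.
Proof. intros H1 H2 e He. pose proof (Rabs_pos (F w)). pose proof (Rabs_pos (G w)).
  destruct (H1 (Rmin 1 (e / (2 * (Rabs (G w) + 1))))) as [d1 [Hd1 P1]]. apply Rmin_pos. lra. apply Rdiv_lt_0_compat; lra.
  destruct (H2 (e / (2 * (Rabs (F w) + 1)))) as [d2 [Hd2 P2]]. apply Rdiv_lt_0_compat; lra.
  exists (Rmin d1 d2). split. apply Rmin_pos; auto. intros y Hy.
  specialize (P1 y (Rlt_le_trans _ _ _ Hy (Rmin_l _ _))). specialize (P2 y (Rlt_le_trans _ _ _ Hy (Rmin_r _ _))).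
  pose proof (Rmin_l 1 (e / (2 * (Rabs (G w) + 1)))) as M1. pose proof (Rmin_r 1 (e / (2 * (Rabs (G w) + 1)))) as M2.
  replace (F y * G y - F w * G w) with (F y * (G y - G w) + (F y - F w) * G w) by ring.
  eapply Rle_lt_trans. apply Rabs_triang. rewrite !Rabs_mult.
  assert (Q1 : Rabs (F y) <= Rabs (F w) + 1). { pose proof (Rabs_triang (F y - F w) (F w)) as T1. replace (F y - F w + F w) with (F y) in T1 by ring. lra. }
  assert (Q2 : Rabs (F y) * Rabs (G y - G w) < e / 2).
  { destruct (Req_dec (Rabs (G y - G w)) 0) as [Z|Z]. rewrite Z, Rmult_0_r; lra.
    apply Rle_lt_trans with ((Rabs (F w) + 1) * Rabs (G y - G w)). apply Rmult_le_compat_r; auto. apply Rabs_pos.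
    replace (e / 2) with ((Rabs (F w) + 1) * (e / (2 * (Rabs (F w) + 1)))) by (field; lra).
    apply Rmult_lt_compat_l; lra. }
  assert (Q3 : Rabs (F y - F w) * Rabs (G w) <= e / 2).
  { replace (e / 2) with ((e / (2 * (Rabs (G w) + 1))) * (Rabs (G w) + 1)) by (field; lra).
    apply Rmult_le_compat; try apply Rabs_pos; lra. }
  lra. Qed.

Lemma contR_inv d (F : Rd d -> R) w : F w > 0 -> contR F w -> contR (fun y => / F y) w.
Proof. intros Hp H e He. destruct (H (Rmin (F w / 2) (e * F w * F w / 2))) as [d1 [Hd1 P1]].
  apply Rmin_pos. lra. apply Rdiv_lt_0_compat; [|lra]. apply Rmult_lt_0_compat; [apply Rmult_lt_0_compat|]; lra.
  exists d1; split; auto. intros y Hy. specialize (P1 y Hy).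
  pose proof (Rmin_l (F w / 2) (e * F w * F w / 2)). pose proof (Rmin_r (F w / 2) (e * F w * F w / 2)).
  assert (F y > F w / 2) by (apply Rabs_def2 in P1; lra).
  replace (/ F y - / F w) with ((F w - F y) / (F y * F w)) by (field; lra).
  unfold Rdiv. rewrite Rabs_mult, Rabs_inv, (Rabs_right (F y * F w)) by nra. apply Rmult_lt_reg_r with (F y * F w). nra.
  rewrite Rmult_assoc, Rinv_l, Rmult_1_r by nra. rewrite Rabs_minus_sym.
  apply Rlt_le_trans with (e * F w * F w / 2). lra. assert (e * F w * F w / 2 <= e * (F y * F w)); [|lra].
  assert (F w * F w / 2 <= F y * F w) by nra. nra. Qed.

Lemma contR_sumL d {A : Type} (l : list A) (F : A -> Rd d -> R) w :
  (forall p, In p l -> contR (F p) w) -> contR (fun y => sumL l (fun p => F p y)) w.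
Proof. induction l as [|p l IH]; intros H; simpl. apply contR_const.
  apply (contR_plus d (F p) (fun y => sumL l (fun p => F p y))). apply H; simpl; auto. apply IH; intros; apply H; simpl; auto. Qed.

Lemma contR_ext d (F F' : Rd d -> R) w : (forall y, F y = F' y) -> contR F w -> contR F' w.
Proof. intros HF H e He. destruct (H e He) as [del [Hd P]]. exists del; split; auto. intros; rewrite <- !HF; auto. Qed.

Lemma cont_vec d (G : Rd d -> nat -> R) w : (forall i, (i < d)%nat -> contR (fun y => G y i) w) ->
  forall e, e > 0 -> exists del, del > 0 /\ forall y, distRd y w < del -> distRd (mkv d (G y)) (mkv d (G w)) < e.
Proof. intros HG e He. set (eta := e / (INR d + 1)). assert (Heta : eta > 0) by (unfold eta; apply Rdiv_lt_0_compat; pose proof (pos_INR d); lra).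
  assert (Hn : forall n, (n <= d)%nat -> exists del, del > 0 /\ forall y, distRd y w < del ->
     sumR n (fun i => Rabs (coord (mkv d (G y)) i - coord (mkv d (G w)) i)) <= INR n * eta).
  { induction n; intros Hnd. exists 1; split. lra. intros; simpl; lra.
    destruct (IHn ltac:(lia)) as [d1 [Hd1 P1]]. destruct (HG n ltac:(lia) eta Heta) as [d2 [Hd2 P2]].
    exists (Rmin d1 d2). split. apply Rmin_pos; auto. intros y Hy.
    specialize (P1 y (Rlt_le_trans _ _ _ Hy (Rmin_l _ _))). specialize (P2 y (Rlt_le_trans _ _ _ Hy (Rmin_r _ _))).
    change (sumR (S n) ?f) with (sumR n f + f n). rewrite S_INR. rewrite (coord_mkv d (G y) n), (coord_mkv d (G w) n) by lia. lra. }
  destruct (Hn d (le_n d)) as [del [Hdel P]]. exists del; split; auto. intros y Hy.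
  eapply Rle_lt_trans. apply dist_le_sum. eapply Rle_lt_trans. apply P; auto.
  unfold eta. apply Rmult_lt_reg_r with (INR d + 1). pose proof (pos_INR d); lra.
  replace (INR d * (e / (INR d + 1)) * (INR d + 1)) with (INR d * e) by (field; pose proof (pos_INR d); lra). nra. Qed.
Definition Et {d} (a : Rd d -> R) (eps tau : R) (p w : Rd d) : R := exp (- (a p + sqd w p / eps) / tau).
Definition SS {d} (P : list (Rd d)) a eps tau (w : Rd d) : R := sumL P (fun p => Et a eps tau p w).
Definition ff {d} (P : list (Rd d)) a eps tau (w : Rd d) : R := - tau * ln (SS P a eps tau w).
Definition gradf {d} (P : list (Rd d)) a eps tau (w : Rd d) (i : nat) : R :=
  sumL P (fun p => Et a eps tau p w * (2 * (coord w i - coord p i) / eps)) / SS P a eps tau w.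

Lemma sumL_ext {A} (l : list A) F G : (forall p, In p l -> F p = G p) -> sumL l F = sumL l G.
Proof. induction l; simpl; intros H; auto. rewrite H, IHl; auto. Qed.

Lemma sumL_scal {A} (l : list A) c F : sumL l (fun p => c * F p) = c * sumL l F.
Proof. induction l; simpl. ring. rewrite IHl; ring. Qed.

Lemma sumL_nonneg {A} (l : list A) F : (forall p, In p l -> 0 <= F p) -> 0 <= sumL l F.
Proof. induction l; simpl; intros H. lra. pose proof (H a (or_introl eq_refl)). pose proof (IHl (fun p Hp => H p (or_intror Hp))). lra. Qed.

Lemma sumL_le {A} (l : list A) F G : (forall p, In p l -> F p <= G p) -> sumL l F <= sumL l G.
Proof. induction l; simpl; intros H. lra. pose proof (H a (or_introl eq_refl)). pose proof (IHl (fun p Hp => H p (or_intror Hp))). lra. Qed.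

Lemma sumL_term {A} (l : list A) F q : (forall p, In p l -> 0 <= F p) -> In q l -> F q <= sumL l F.
Proof. induction l; simpl; intros H Hq. contradiction. destruct Hq as [->|Hq].
  pose proof (sumL_nonneg l F (fun p Hp => H p (or_intror Hp))). lra.
  pose proof (H a (or_introl eq_refl)). pose proof (IHl (fun p Hp => H p (or_intror Hp)) Hq). lra. Qed.

Lemma sumL_const {A} (l : list A) c : sumL l (fun _ => c) = INR (length l) * c.
Proof. induction l; simpl sumL. simpl; ring. rewrite IHl. simpl length. rewrite S_INR. ring. Qed.

Lemma Et_pos d (a : Rd d -> R) eps tau p w : 0 < Et a eps tau p w.
Proof. apply exp_pos. Qed.

Lemma SS_pos d (P : list (Rd d)) a eps tau w : P <> nil -> 0 < SS P a eps tau w.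
Proof. intros HP. destruct P as [|p P]. congruence. unfold SS; simpl.
  pose proof (Et_pos d a eps tau p w). pose proof (sumL_nonneg P (fun p => Et a eps tau p w) (fun q _ => Rlt_le _ _ (Et_pos d a eps tau q w))). lra. Qed.

Lemma hasg_Et d (a : Rd d -> R) eps tau p w : eps > 0 -> tau > 0 ->
  hasg (Et a eps tau p) (fun i => Et a eps tau p w * (- (1 / eps) / tau) * (2 * (coord w i - coord p i))) w.
Proof. intros He Ht.
  set (phi := fun t => - a p / tau + (- (1 / eps) / tau) * t).
  assert (H1 : hasg (fun y => phi (sqd y p)) (fun i => (- (1 / eps) / tau) * (2 * (coord w i - coord p i))) w).
  { apply hasg_comp. apply derivable_affine. apply hasg_sqd. }
  pose proof (hasg_comp d (fun y => phi (sqd y p)) _ w exp _ (derivable_pt_lim_exp _) H1).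
  eapply hasg_ext; [| | apply H].
  - intros y. unfold Et, phi. f_equal. field. lra.
  - intros i Hi. simpl. unfold Et, phi. replace (- (a p + sqd w p / eps) / tau) with (- a p / tau + - (1 / eps) / tau * sqd w p) by (field; lra). ring. Qed.

Lemma hasg_ff d (P : list (Rd d)) a eps tau w : eps > 0 -> tau > 0 -> P <> nil ->
  hasg (ff P a eps tau) (gradf P a eps tau w) w.
Proof. intros He Ht HP.
  assert (H1 : hasg (SS P a eps tau) (fun i => sumL P (fun p => Et a eps tau p w * (- (1 / eps) / tau) * (2 * (coord w i - coord p i)))) w).
  { apply (hasg_sumL d P (fun p => Et a eps tau p)). intros; apply hasg_Et; auto. }
  pose proof (SS_pos d P a eps tau w HP).
  assert (Hd : derivable_pt_lim (fun t => - tau * ln t) (SS P a eps tau w) (- tau * / SS P a eps tau w)).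
  { change (fun t => - tau * ln t) with (mult_real_fct (- tau) ln). apply derivable_pt_lim_scal. apply derivable_pt_lim_ln; auto. }
  pose proof (hasg_comp d _ _ w _ _ Hd H1).
  eapply hasg_ext; [| | apply H0].
  - intros y; reflexivity.
  - intros i Hi. unfold gradf. 
    rewrite (sumL_ext P (fun p => Et a eps tau p w * (- (1 / eps) / tau) * (2 * (coord w i - coord p i)))
       (fun p => (- (1 / eps) / tau) * (Et a eps tau p w * (2 * (coord w i - coord p i) / eps) * eps))).
    rewrite sumL_scal. rewrite (sumL_ext P (fun p => Et a eps tau p w * (2 * (coord w i - coord p i) / eps) * eps)
       (fun p => eps * (Et a eps tau p w * (2 * (coord w i - coord p i) / eps)))) by (intros; ring).
    rewrite sumL_scal. field. split; lra.
    intros p _. field. split; lra. Qed.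

Lemma contR_Et d (a : Rd d -> R) eps tau p w : eps > 0 -> tau > 0 -> contR (Et a eps tau p) w.
Proof. intros. eapply hasg_cont. apply hasg_Et; auto. Qed.

Lemma cont_gradf d (P : list (Rd d)) a eps tau w i : eps > 0 -> tau > 0 -> P <> nil -> (i < d)%nat ->
  contR (fun y => gradf P a eps tau y i) w.
Proof. intros He Ht HP Hi. unfold gradf, Rdiv at 2. apply contR_mult.
  - apply (contR_sumL d P (fun p y => Et a eps tau p y * (2 * (coord y i - coord p i) / eps))).
    intros p _. apply contR_mult. apply contR_Et; auto.
    apply (contR_ext d (fun y => (2 / eps) * coord y i + (- (2 / eps) * coord p i))). intros y; field; lra.
    apply contR_plus. apply contR_mult. apply contR_const. apply contR_coord; auto. apply contR_const.
  - apply contR_inv. apply SS_pos; auto. eapply hasg_cont.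
    apply (hasg_sumL d P (fun p => Et a eps tau p)). intros; apply hasg_Et; auto. Qed.

Lemma ff_C1 d (K : Rd d -> Prop) (P : list (Rd d)) a eps tau : eps > 0 -> tau > 0 -> P <> nil ->
  is_C1_deriv K (ff P a eps tau) (fun w => mkv d (gradf P a eps tau w)).
Proof. intros He Ht HP. split.
  - intros x Kx e Hee. destruct (cont_vec d (fun y => gradf P a eps tau y) x) with e as [del [Hdel Hd]]; auto.
    intros i Hi. apply cont_gradf; auto. exists del; split; auto.
  - intros x Kx e Hee. destruct (hasg_ff d P a eps tau x He Ht HP (e / 2) ltac:(lra)) as [del [Hdel Hd]].
    exists del. split; auto. intros y Ky Hyx Hy. specialize (Hd y Hy). pose proof (dist_pos_neq d y x Hyx).
    unfold inner_diff. rewrite (sumR_ext d (fun i => coord (mkv d (gradf P a eps tau x)) i * (coord y i - coord x i))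
       (fun i => gradf P a eps tau x i * (coord y i - coord x i))) by (intros; rewrite coord_mkv; auto).
    unfold Rdiv. rewrite Rabs_mult, Rabs_inv, (Rabs_right (distRd y x)) by lra.
    apply Rmult_lt_reg_r with (distRd y x); auto. rewrite Rmult_assoc, Rinv_l, Rmult_1_r by lra. nra. Qed.
Lemma sumL_plus {A} (l : list A) F G : sumL l (fun p => F p + G p) = sumL l F + sumL l G.
Proof. induction l; simpl. ring. rewrite IHl; ring. Qed.

Lemma nrm_zero n : nrm n (fun _ => 0) = 0.
Proof. unfold nrm. rewrite (sumR_ext n _ (fun _ => 0)) by (intros; ring). rewrite sumR_zero. apply sqrt_0. Qed.

Lemma nrm_sumL {A} n (l : list A) (F : A -> nat -> R) : nrm n (fun i => sumL l (fun p => F p i)) <= sumL l (fun p => nrm n (F p)).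
Proof. induction l as [|p l IH]; simpl. rewrite nrm_zero; lra.
  eapply Rle_trans. apply (nrm_triangle n (F p) (fun i => sumL l (fun p => F p i))). lra. Qed.

Lemma ln_le x y : 0 < x -> x <= y -> ln x <= ln y.
Proof. intros Hx Hxy. destruct Hxy as [H|H]. left; apply ln_increasing; auto. subst; lra. Qed.

Lemma sq_div_ge r e : e > 0 -> r >= 3 * e -> r ^ 2 / e >= 3 * r.
Proof. intros He Hr. apply Rle_ge. apply Rmult_le_reg_r with e; auto. replace (r ^ 2 / e * e) with (r ^ 2) by (field; lra). nra. Qed.

Lemma sq_div_lt r e : e > 0 -> 0 <= r < e -> r ^ 2 / e < e.
Proof. intros He Hr. apply Rmult_lt_reg_r with e; auto. replace (r ^ 2 / e * e) with (r ^ 2) by (field; lra). nra. Qed.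

Lemma sq_div_mono r R1 e : e > 0 -> 0 <= R1 <= r -> R1 ^ 2 / e <= r ^ 2 / e.
Proof. intros He Hr. unfold Rdiv. apply Rmult_le_compat_r. left; apply Rinv_0_lt_compat; auto. nra. Qed.

Lemma sq_div_nonneg r e : e > 0 -> 0 <= r ^ 2 / e.
Proof. intros He. unfold Rdiv. apply Rmult_le_pos. nra. left; apply Rinv_0_lt_compat; auto. Qed.

Lemma grad_bound d (K : Rd d -> Prop) (P : list (Rd d)) a eps tau s T D R1 w :
  eps > 0 -> tau > 0 -> eps <= 1 -> P <> nil -> (forall p, In p P -> K p) ->
  (forall w, K w -> exists p, In p P /\ distRd w p < eps) ->
  (forall u v, K u -> K v -> distRd u v <= D) ->
  (forall p, In p P -> 0 <= a p <= T) ->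
  (forall p q, In p P -> In q P -> distRd p q < s -> a p <= a q + distRd p q) ->
  0 <= R1 -> eps * (T + 5) <= R1 ^ 2 -> R1 + eps <= s ->
  INR (length P) * (2 * D / eps * exp (- (4 * eps) / tau)) <= 1 -> K w ->
  vnorm (mkv d (gradf P a eps tau w)) <= 7.
Proof. intros He Ht He1 HP HPK Hnet HD Ha Hlip HR0 HR1 HR1s Htau Kw.
  destruct (Hnet w Kw) as [j [Hj Hwj]].
  set (S := SS P a eps tau w). assert (HS : 0 < S) by (apply SS_pos; auto).
  set (c0 := 2 * D / eps * exp (- (4 * eps) / tau)).
  assert (Hterm : forall p, In p P -> Et a eps tau p w * (2 / eps) * distRd w p <= 6 * Et a eps tau p w + c0 * Et a eps tau j w).
  { intros p Hp. pose proof (Et_pos d a eps tau p w). pose proof (Et_pos d a eps tau j w).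
    pose proof (HD w p Kw (HPK p Hp)) as HDp. pose proof (dist_nonneg d w p). pose proof (dist_nonneg d w j).
    assert (Hc0 : 0 <= c0). { unfold c0. apply Rmult_le_pos. unfold Rdiv. apply Rmult_le_pos. lra. left; apply Rinv_0_lt_compat; lra. left; apply exp_pos. }
    destruct (Rlt_le_dec (distRd w p) (3 * eps)).
    - assert ((2 / eps) * distRd w p <= 6). { apply Rmult_le_reg_r with eps; auto. unfold Rdiv. 
        replace (2 * / eps * distRd w p * eps) with (2 * distRd w p) by (field; lra). lra. }
      assert (Et a eps tau p w * (2 / eps * distRd w p) <= Et a eps tau p w * 6) by (apply Rmult_le_compat_l; lra).
      assert (0 <= c0 * Et a eps tau j w) by nra. rewrite Rmult_assoc. lra.
    - assert (Hh : a p + sqd w p / eps >= a j + sqd w j / eps + 4 * eps).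
      { rewrite !sqd_dist. pose proof (Ha p Hp). pose proof (Ha j Hj).
        pose proof (sq_div_lt (distRd w j) eps He ltac:(lra)).
        destruct (Rle_lt_dec (distRd w p) R1).
        - assert (distRd j p < s). { pose proof (dist_tri d j w p). rewrite (dist_sym d j w) in H6. lra. }
          pose proof (Hlip j p Hj Hp H6). pose proof (dist_tri d j w p). rewrite (dist_sym d j w) in H8.
          pose proof (sq_div_ge (distRd w p) eps He ltac:(lra)). lra.
        - pose proof (sq_div_mono (distRd w p) R1 eps He ltac:(lra)).
          assert (T + 5 <= R1 ^ 2 / eps). { apply Rmult_le_reg_r with eps; auto.
            replace (R1 ^ 2 / eps * eps) with (R1 ^ 2) by (field; lra). lra. } lra. }
      assert (HE : Et a eps tau p w <= exp (- (4 * eps) / tau) * Et a eps tau j w).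
      { unfold Et. rewrite <- exp_plus.
        set (hp := a p + sqd w p / eps) in *. set (hj := a j + sqd w j / eps) in *.
        assert (X : - hp / tau <= - (4 * eps) / tau + - hj / tau).
        { apply Rmult_le_reg_r with tau; auto.
          replace (- hp / tau * tau) with (- hp) by (field; lra).
          replace ((- (4 * eps) / tau + - hj / tau) * tau) with (- (4 * eps) - hj) by (field; lra). lra. }
        destruct X as [X|X]. left; apply exp_increasing; auto. rewrite X; lra. }
      assert (Hk : 0 < 2 / eps) by (apply Rdiv_lt_0_compat; lra).
      assert (Et a eps tau p w * (2 / eps) <= exp (- (4 * eps) / tau) * Et a eps tau j w * (2 / eps)) by (apply Rmult_le_compat_r; lra).
      assert (Et a eps tau p w * (2 / eps) * distRd w p <= exp (- (4 * eps) / tau) * Et a eps tau j w * (2 / eps) * D).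
      { apply Rmult_le_compat; auto. nra. }
      assert (exp (- (4 * eps) / tau) * Et a eps tau j w * (2 / eps) * D = c0 * Et a eps tau j w) by (unfold c0; field; lra).
      lra. }
  change (vnorm (mkv d (gradf P a eps tau w))) with (nrm d (coord (mkv d (gradf P a eps tau w)))).
  rewrite (nrm_ext d _ (fun i => / S * sumL P (fun p => (Et a eps tau p w * (2 / eps)) * (coord w i - coord p i)))).
  2:{ intros i Hi. rewrite coord_mkv by auto. unfold gradf. fold S. rewrite Rmult_comm. unfold Rdiv. f_equal.
      apply sumL_ext. intros; field; lra. }
  rewrite nrm_scal. rewrite Rabs_right by (left; apply Rinv_0_lt_compat; auto).
  eapply Rle_trans. apply Rmult_le_compat_l. left; apply Rinv_0_lt_compat; auto.
  apply (nrm_sumL d P (fun p i => (Et a eps tau p w * (2 / eps)) * (coord w i - coord p i))).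
  rewrite (sumL_ext P _ (fun p => Et a eps tau p w * (2 / eps) * distRd w p)).
  2:{ intros p _. rewrite nrm_scal. rewrite Rabs_right. rewrite dist_nrm. auto.
      pose proof (Et_pos d a eps tau p w). pose proof (Rdiv_lt_0_compat 2 eps ltac:(lra) He). nra. }
  assert (Hsum : sumL P (fun p => Et a eps tau p w * (2 / eps) * distRd w p) <= 7 * S).
  { eapply Rle_trans. apply sumL_le. apply Hterm. rewrite sumL_plus, sumL_scal, sumL_const.
    fold (SS P a eps tau w). fold S.
    assert (Et a eps tau j w <= S). { unfold S, SS. apply (sumL_term P (fun p => Et a eps tau p w)); auto. intros; left; apply Et_pos. }
    pose proof (Et_pos d a eps tau j w).
    assert (INR (length P) * (c0 * Et a eps tau j w) <= Et a eps tau j w).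
    { rewrite <- Rmult_assoc. apply Rle_trans with (1 * Et a eps tau j w); [apply Rmult_le_compat_r; [lra | unfold c0; lra] | lra]. }
    lra. }
  apply Rle_trans with (/ S * (7 * S)). apply Rmult_le_compat_l; auto. left; apply Rinv_0_lt_compat; auto.
  right; field; lra. Qed.
Lemma exp_le x y : x <= y -> exp x <= exp y.
Proof. intros [H|H]. left; apply exp_increasing; auto. subst; lra. Qed.

Lemma length_pos {A} (l : list A) : l <> nil -> 0 < INR (length l).
Proof. intros H. destruct l. congruence. simpl length. apply lt_0_INR; lia. Qed.

Lemma ff_upper d (P : list (Rd d)) a eps tau w j : tau > 0 -> In j P -> ff P a eps tau w <= a j + sqd w j / eps.
Proof. intros Ht Hj. unfold ff. assert (P <> nil) by (intros ->; contradiction).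
  pose proof (SS_pos d P a eps tau w H).
  assert (Et a eps tau j w <= SS P a eps tau w) by (apply (sumL_term P (fun p => Et a eps tau p w)); auto; intros; left; apply Et_pos).
  pose proof (ln_le _ _ (Et_pos d a eps tau j w) H1). unfold Et in H2. rewrite ln_exp in H2.
  set (hj := a j + sqd w j / eps) in *.
  apply (Rmult_le_compat_l tau _ _ (Rlt_le _ _ Ht)) in H2.
  replace (tau * (- hj / tau)) with (- hj) in H2 by (field; lra).
  replace (- tau * ln (SS P a eps tau w)) with (- (tau * ln (SS P a eps tau w))) by ring. lra. Qed.

Lemma ff_lower d (P : list (Rd d)) a eps tau z m0 : tau > 0 -> P <> nil -> tau * ln (INR (length P)) <= eps ->
  (forall p, In p P -> m0 <= a p + sqd z p / eps) -> m0 - eps <= ff P a eps tau z.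
Proof. intros Ht HP Hln Hm. unfold ff. pose proof (SS_pos d P a eps tau z HP). pose proof (length_pos P HP).
  assert (SS P a eps tau z <= INR (length P) * exp (- m0 / tau)).
  { unfold SS. rewrite <- sumL_const. apply sumL_le. intros p Hp. unfold Et. apply exp_le.
    specialize (Hm p Hp). apply Rmult_le_reg_r with tau; auto. set (hp := a p + sqd z p / eps) in *.
    replace (- hp / tau * tau) with (- hp) by (field; lra).
    replace (- m0 / tau * tau) with (- m0) by (field; lra). lra. }
  pose proof (ln_le _ _ H H1). rewrite ln_mult, ln_exp in H2 by (auto; apply exp_pos).
  apply (Rmult_le_compat_l tau _ _ (Rlt_le _ _ Ht)) in H2.
  replace (tau * (ln (INR (length P)) + - m0 / tau)) with (tau * ln (INR (length P)) - m0) in H2 by (field; lra).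
  replace (- tau * ln (SS P a eps tau z)) with (- (tau * ln (SS P a eps tau z))) by ring. lra. Qed.

Lemma ff_abs d (K : Rd d -> Prop) (P : list (Rd d)) a eps tau T w : eps > 0 -> tau > 0 -> eps <= 1 -> P <> nil ->
  (forall w, K w -> exists p, In p P /\ distRd w p < eps) -> (forall p, In p P -> 0 <= a p <= T) ->
  tau * ln (INR (length P)) <= eps -> K w -> Rabs (ff P a eps tau w) <= T + 1.
Proof. intros He Ht He1 HP Hnet Ha Hln Kw. destruct (Hnet w Kw) as [j [Hj Hwj]].
  pose proof (ff_upper d P a eps tau w j Ht Hj). 
  assert (sqd w j / eps < eps) by (rewrite sqd_dist; apply sq_div_lt; auto; split; [apply dist_nonneg|auto]).
  pose proof (Ha j Hj).
  pose proof (ff_lower d P a eps tau w 0 Ht HP Hln). 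
  assert (0 - eps <= ff P a eps tau w). { apply H2. intros p Hp. pose proof (Ha p Hp). pose proof (sq_div_nonneg (distRd w p) eps He).
    rewrite sqd_dist. lra. }
  apply Rabs_le. lra. Qed.
Lemma glb_exists (E : R -> Prop) m : (exists r, E r) -> (forall r, E r -> m <= r) -> exists l, is_glb E l.
Proof. intros [r0 Hr0] Hm. destruct (completeness (fun x => E (- x))) as [l [Hl1 Hl2]].
  exists (- m). intros x Hx. specialize (Hm _ Hx). lra. exists (- r0). rewrite Ropp_involutive; auto.
  exists (- l). split.
  - intros r Hr. assert (- r <= l) by (apply Hl1; rewrite Ropp_involutive; auto). lra.
  - intros m' Hm'. assert (l <= - m'). { apply Hl2. intros x Hx. specialize (Hm' _ Hx). lra. } lra. Qed.

Lemma infr_le (E : R -> Prop) m r : (forall r, E r -> m <= r) -> E r -> infr E <= r.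
Proof. intros Hm Hr. assert (is_glb E (infr E)). { unfold infr. apply epsilon_spec. apply glb_exists with m; eauto. }
  apply H; auto. Qed.

Lemma vnorm_dist d (u v : Rd d) : vnorm u <= vnorm v + distRd u v.
Proof. unfold vnorm. change (nrm d (coord u) <= nrm d (coord v) + nrm d (fun i => coord u i - coord v i)).
  eapply Rle_trans; [| apply nrm_triangle]. right. apply nrm_ext. intros; ring. Qed.

Lemma vnorm_nonneg d (u : Rd d) : 0 <= vnorm u.
Proof. apply sqrt_pos. Qed.

Lemma cont_bounded d (K : Rd d -> Prop) (hK : compact_Rd K) (g : Rd d -> Rd d) :
  (forall x, K x -> forall eps, eps > 0 -> exists delta, delta > 0 /\
      forall y, K y -> distRd y x < delta -> distRd (g y) (g x) < eps) ->
  exists M, forall w, K w -> vnorm (g w) <= M.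
Proof. intros Hc.
  set (I := {p : Rd d & {del : R | K p /\ del > 0 /\ forall y, K y -> distRd y p < del -> distRd (g y) (g p) < 1}}).
  destruct (hK I (fun i y => distRd y (projT1 i) < proj1_sig (projT2 i))) as [l Hl].
  - intros i; apply ball_open.
  - intros w Kw. destruct (Hc w Kw 1 ltac:(lra)) as [del [Hdel Hd]].
    exists (existT _ w (exist _ del (conj Kw (conj Hdel Hd)))). simpl. rewrite dist_refl; lra.
  - exists (sumL l (fun i => vnorm (g (projT1 i)) + 1)). intros w Kw.
    destruct (Hl w Kw) as [i [Hi Ui]].
    assert (vnorm (g (projT1 i)) + 1 <= sumL l (fun i => vnorm (g (projT1 i)) + 1)).
    { apply (sumL_term l (fun i => vnorm (g (projT1 i)) + 1)); auto. intros; pose proof (vnorm_nonneg d (g (projT1 p))); lra. }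
    clear Hi. destruct i as [p [del [Kp [Hdel Hd]]]]. simpl in *.
    specialize (Hd w Kw Ui). pose proof (vnorm_dist d (g w) (g p)). lra. Qed.

Lemma C1norm_le d (K : Rd d -> Prop) (hK : compact_Rd K) f df B1 B2 : (exists w, K w) -> is_C1_deriv K f df ->
  (forall w, K w -> Rabs (f w) <= B1) -> (forall w, K w -> vnorm (df w) <= B2) -> C1norm K f <= B1 + B2.
Proof. intros [w0 Kw0] Hdf H1 H2. unfold C1norm.
  assert (supK K (fun x => Rabs (f x)) <= B1).
  { unfold supK. apply supr_le. exists (Rabs (f w0)); eauto. intros r [x [Kx ->]]; auto. }
  assert (infr (fun r => exists df, is_C1_deriv K f df /\ r = supK K (fun x => vnorm (df x))) <= supK K (fun x => vnorm (df x))).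
  { apply infr_le with 0.
    - intros r [df' [Hdf' ->]]. destruct (cont_bounded d K hK df' (proj1 Hdf')) as [M HM].
      apply Rle_trans with (vnorm (df' w0)). apply vnorm_nonneg.
      unfold supK. apply supr_ge with M. exists (vnorm (df' w0)); eauto. intros r [x [Kx ->]]; auto. eauto.
    - exists df; split; auto. }
  assert (supK K (fun x => vnorm (df x)) <= B2).
  { unfold supK. apply supr_le. exists (vnorm (df w0)); eauto. intros r [x [Kx ->]]; auto. }
  lra. Qed.
Definition rho {d} (K : Rd d -> Prop) (s : R) (x v : Rd d) : R :=
  infr (fun r => exists l, chainP K s x l v /\ r = clen x l v).

Lemma clen_nonneg d (u : Rd d) l v : 0 <= clen u l v.
Proof. pose proof (clen_ge_dist d u l v). pose proof (dist_nonneg d u v). lra. Qed.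

Lemma rho_glb d (K : Rd d -> Prop) (hconn : connected_Rd K) s x v : K x -> K v -> s > 0 ->
  is_glb (fun r => exists l, chainP K s x l v /\ r = clen x l v) (rho K s x v).
Proof. intros Kx Kv Hs. unfold rho, infr. apply epsilon_spec. apply glb_exists with 0.
  destruct (chain_exists d K hconn x s Kx Hs v Kv) as [l Hl]. eauto.
  intros r [l [_ ->]]. apply clen_nonneg. Qed.

Lemma rho_nonneg d (K : Rd d -> Prop) (hconn : connected_Rd K) s x v : K x -> K v -> s > 0 -> 0 <= rho K s x v.
Proof. intros. apply (rho_glb d K hconn s x v H H0 H1). intros r [l [_ ->]]. apply clen_nonneg. Qed.

Lemma rho_le d (K : Rd d -> Prop) (hconn : connected_Rd K) s x v l : K x -> K v -> s > 0 -> chainP K s x l v -> rho K s x v <= clen x l v.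
Proof. intros. apply (rho_glb d K hconn s x v H H0 H1). eauto. Qed.

Lemma rho_approx d (K : Rd d -> Prop) (hconn : connected_Rd K) s x v eta : K x -> K v -> s > 0 -> eta > 0 ->
  exists l, chainP K s x l v /\ clen x l v <= rho K s x v + eta.
Proof. intros Kx Kv Hs He. apply NNPP. intros Hno.
  assert (rho K s x v + eta <= rho K s x v).
  { apply (rho_glb d K hconn s x v Kx Kv Hs). intros r [l [Hl ->]]. apply Rnot_lt_le. intros Hlt. apply Hno. exists l; split; auto; lra. }
  lra. Qed.

Lemma rho_step d (K : Rd d -> Prop) (hconn : connected_Rd K) s x v v' : K x -> K v -> K v' -> s > 0 -> distRd v v' < s ->
  rho K s x v' <= rho K s x v + distRd v v'.
Proof. intros Kx Kv Kv' Hs Hd. apply Rnot_lt_le. intros Hlt.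
  destruct (rho_approx d K hconn s x v ((rho K s x v' - rho K s x v - distRd v v') / 2) Kx Kv Hs) as [l [Hl Hlen]]. lra.
  assert (chainP K s x (l ++ v :: nil) v') by (apply chain_cat; auto; simpl; auto).
  pose proof (rho_le d K hconn s x v' _ Kx Kv' Hs H). rewrite clen_cat in H0. simpl in H0. lra. Qed.

Lemma rho_near d (K : Rd d -> Prop) (hconn : connected_Rd K) s x v : K x -> K v -> s > 0 -> distRd x v < s -> rho K s x v <= distRd x v.
Proof. intros. apply (rho_le d K hconn s x v nil); auto. Qed.
Lemma ln_le_self x : 1 <= x -> 0 <= ln x <= x.
Proof. intros Hx. split.
  - rewrite <- ln_1. apply ln_le; lra.
  - assert (exp x > x). { destruct (Req_dec x 0). lra. pose proof (exp_ineq1 x H). lra. }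
    left. rewrite <- (ln_exp x) at 2. apply ln_increasing; lra. Qed.

Lemma exp_neg_le y : y > 0 -> exp (- y) <= / y.
Proof. intros Hy. pose proof (exp_ineq1 y ltac:(lra)). rewrite exp_Ropp.
  apply Rinv_le_contravar; lra. Qed.

Lemma chain_bound d (K : Rd d -> Prop) (hK : compact_Rd K) (hconn : connected_Rd K) x Cx :
  K x -> Cx > 0 ->
  (forall f : Rd d -> R, C1_on K f -> forall y, K y -> y <> x -> Rabs (f y - f x) / distRd y x <= Cx * C1norm K f) ->
  forall z, K z -> Cx * distRd z x <= 1 / 2 -> forall s0, s0 > 0 ->
  exists l, chainP K s0 x l z /\ clen x l z <= 18 * Cx * distRd z x + s0.
Proof. intros Kx HCx Hmark z Kz Hzx s0 Hs0.
  destruct (classic (z = x)) as [Ezx|Nzx].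
  { subst z. exists nil. simpl. rewrite dist_refl. split. lra. pose proof (dist_nonneg d x x). nra. }
  set (T := 10).
  set (eps := Rmin (1 / 8) (Rmin (s0 / 10) (s0 ^ 2 / 60))).
  assert (He : eps > 0). { unfold eps. repeat apply Rmin_pos; try lra. apply Rdiv_lt_0_compat; [nra|lra]. }
  assert (He8 : eps <= 1 / 8) by apply Rmin_l.
  assert (He10 : eps <= s0 / 10) by (eapply Rle_trans; [apply Rmin_r|apply Rmin_l]).
  assert (He60 : eps <= s0 ^ 2 / 60) by (eapply Rle_trans; [apply Rmin_r|apply Rmin_r]).
  set (R1 := s0 / 2).
  assert (HR1 : eps * (T + 5) <= R1 ^ 2). { unfold R1, T. assert (s0 ^ 2 / 60 * 15 = (s0 / 2) ^ 2) by field. nra. }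
  assert (HR1s : R1 + eps <= s0) by (unfold R1; lra).
  set (a := fun p => Rmin T (rho K s0 x p)).
  assert (Ha : forall p, K p -> 0 <= a p <= T).
  { intros p Kp. unfold a. pose proof (rho_nonneg d K hconn s0 x p Kx Kp Hs0). split. apply Rmin_glb; unfold T; lra. apply Rmin_l. }
  assert (Hlip : forall p q, K p -> K q -> distRd p q < s0 -> a p <= a q + distRd p q).
  { intros p q Kp Kq Hpq. unfold a. rewrite dist_sym in Hpq |- *. pose proof (rho_step d K hconn s0 x q p Kx Kq Kp Hs0 Hpq).
    unfold Rmin. destruct (Rle_dec T (rho K s0 x p)); destruct (Rle_dec T (rho K s0 x q)); pose proof (dist_nonneg d q p); lra. }
  destruct (compact_net d K hK eps He) as [P [HPK Hnet]].
  assert (HP : P <> nil). { destruct (Hnet x Kx) as [p [Hp _]]. intros ->. contradiction. }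
  destruct (compact_bounded d K hK x) as [M HM].
  set (D := 2 * M). assert (HD : forall u v, K u -> K v -> distRd u v <= D).
  { intros u v Ku Kv. pose proof (dist_tri d u x v). rewrite (dist_sym d x v) in H. pose proof (HM u Ku). pose proof (HM v Kv). unfold D; lra. }
  assert (HD0 : 0 <= D). { pose proof (HD x x Kx Kx). pose proof (dist_nonneg d x x). lra. }
  set (N := INR (length P)). assert (HN : 1 <= N). { unfold N. destruct P as [|p0 P0]. congruence. simpl length. rewrite S_INR. pose proof (pos_INR (length P0)). lra. }
  set (tau := Rmin (eps / (N + 1)) (2 * eps ^ 2 / (N * D + 1))).
  assert (Ht : tau > 0). { unfold tau. apply Rmin_pos; apply Rdiv_lt_0_compat; try nra. }
  assert (Hln : tau * ln N <= eps).
  { pose proof (ln_le_self N HN). apply Rle_trans with (eps / (N + 1) * N). apply Rmult_le_compat; try lra. apply Rmin_l.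
    apply Rmult_le_reg_r with (N + 1). lra. replace (eps / (N + 1) * N * (N + 1)) with (eps * N) by (field; lra). nra. }
  assert (Htau : N * (2 * D / eps * exp (- (4 * eps) / tau)) <= 1).
  { assert (exp (- (4 * eps) / tau) <= tau / (4 * eps)).
    { replace (- (4 * eps) / tau) with (- (4 * eps / tau)) by (field; lra).
      eapply Rle_trans. apply exp_neg_le. apply Rdiv_lt_0_compat; lra. right; field; lra. }
    assert (tau <= 2 * eps ^ 2 / (N * D + 1)) by apply Rmin_r.
    assert (0 <= 2 * D / eps) by (apply Rmult_le_pos; [lra| left; apply Rinv_0_lt_compat; lra]).
    apply Rle_trans with (N * (2 * D / eps * (tau / (4 * eps)))).
    apply Rmult_le_compat_l. lra. apply Rmult_le_compat_l; auto.
    apply Rle_trans with (N * (2 * D / eps * (2 * eps ^ 2 / (N * D + 1) / (4 * eps)))).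
    apply Rmult_le_compat_l. lra. apply Rmult_le_compat_l; auto. unfold Rdiv. apply Rmult_le_compat_r; auto.
    left; apply Rinv_0_lt_compat; lra.
    replace (N * (2 * D / eps * (2 * eps ^ 2 / (N * D + 1) / (4 * eps)))) with (N * D / (N * D + 1)) by (field; nra).
    apply Rmult_le_reg_r with (N * D + 1). nra. replace (N * D / (N * D + 1) * (N * D + 1)) with (N * D) by (field; nra). nra. }
  set (f := ff P a eps tau).
  assert (HC1 : is_C1_deriv K f (fun w => mkv d (gradf P a eps tau w))) by (apply ff_C1; auto).
  assert (Hnorm : C1norm K f <= (T + 1) + 7).
  { apply C1norm_le with (fun w => mkv d (gradf P a eps tau w)); eauto.
    - intros w Kw. apply (ff_abs d K); auto; try (intros p Hp; apply Ha; auto); try exact Hln; lra.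
    - intros w Kw. apply (grad_bound d K P a eps tau s0 T D R1); auto; try (intros p Hp; apply Ha; auto);
      try (intros p q Hp Hq; apply Hlip; auto); try exact Htau; unfold R1 in *; lra. }
  pose proof (Hmark f (ex_intro _ _ HC1) z Kz Nzx) as Hm.
  pose proof (dist_pos_neq d z x Nzx) as Hdzx.
  assert (Hdiff : f z - f x <= 18 * Cx * distRd z x).
  { assert (Rabs (f z - f x) <= Cx * C1norm K f * distRd z x).
    { apply Rmult_le_reg_r with (/ distRd z x). apply Rinv_0_lt_compat; auto.
      replace (Rabs (f z - f x) * / distRd z x) with (Rabs (f z - f x) / distRd z x) by reflexivity.
      replace (Cx * C1norm K f * distRd z x * / distRd z x) with (Cx * C1norm K f) by (field; lra). auto. }
    pose proof (Rle_abs (f z - f x)). unfold T in Hnorm. 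
    assert (Cx * C1norm K f * distRd z x <= 18 * Cx * distRd z x). { apply Rmult_le_compat_r. lra. nra. } lra. }
  assert (Hfx : f x < 2 * eps).
  { destruct (Hnet x Kx) as [j [Hj Hxj]]. pose proof (ff_upper d P a eps tau x j Ht Hj).
    assert (sqd x j / eps < eps) by (rewrite sqd_dist; apply sq_div_lt; auto; split; [apply dist_nonneg|auto]).
    assert (a j <= distRd x j). { unfold a. eapply Rle_trans. apply Rmin_r. apply rho_near; auto. lra. }
    unfold f. lra. }
  assert (Hfz : Rmin T (rho K s0 x z) - eps / 4 - eps <= f z).
  { apply ff_lower; auto. intros p Hp. rewrite sqd_dist. set (r := distRd z p).
    pose proof (dist_nonneg d z p) as Hr0. fold r in Hr0. pose proof (Ha p (HPK p Hp)).
    destruct (Rle_lt_dec r R1).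
    - assert (rho K s0 x z <= rho K s0 x p + r).
      { unfold r. rewrite dist_sym. apply rho_step; auto. rewrite dist_sym; fold r; unfold R1 in *; lra. }
      assert (Rmin T (rho K s0 x z) <= a p + r).
      { unfold a, Rmin. destruct (Rle_dec T (rho K s0 x z)); destruct (Rle_dec T (rho K s0 x p)); lra. }
      assert (r ^ 2 / eps >= r - eps / 4).
      { apply Rle_ge. apply Rmult_le_reg_r with eps; auto. replace (r ^ 2 / eps * eps) with (r ^ 2) by (field; lra). pose proof (pow2_ge_0 (r - eps / 2)). nra. }
      lra.
    - pose proof (sq_div_mono r R1 eps He ltac:(unfold R1 in *; lra)).
      assert (T + 5 <= R1 ^ 2 / eps). { apply Rmult_le_reg_r with eps; auto.
        replace (R1 ^ 2 / eps * eps) with (R1 ^ 2) by (field; lra). lra. }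
      pose proof (Rmin_l T (rho K s0 x z)). lra. }
  assert (Hrho : rho K s0 x z < 18 * Cx * distRd z x + 13 / 4 * eps).
  { unfold f in *. assert (Rmin T (rho K s0 x z) < 18 * Cx * distRd z x + 13 / 4 * eps) by lra.
    unfold Rmin in H. destruct (Rle_dec T (rho K s0 x z)); auto. unfold T in *. lra. }
  destruct (rho_approx d K hconn s0 x z eps Kx Kz Hs0 He) as [l [Hl Hlen]].
  exists l. split; auto. lra. Qed.
Theorem mainTheorem8 (d : nat) (K : Rd d -> Prop)
  (hK : compact_Rd K) (hconn : connected_Rd K)
  (hmark : forall x, K x -> exists Cx, Cx > 0 /\
     forall f : Rd d -> R, C1_on K f ->
       forall y, K y -> y <> x ->
         Rabs (f y - f x) / distRd y x <= Cx * C1norm K f) :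
  pointwise_Whitney_regular K.
Proof.
  intros x Kx. destruct (hmark x Kx) as [Cx [HCx Hm]].
  exists (fun y => distRd y x < / (2 * Cx)), (18 * Cx).
  split; [apply ball_open|]. split; [rewrite dist_refl; apply Rinv_0_lt_compat; lra|]. split; [lra|].
  intros y Vy Ky.
  assert (Hc : Cx * distRd y x <= 1 / 2).
  { apply Rmult_le_reg_r with (/ Cx). apply Rinv_0_lt_compat; lra.
    replace (Cx * distRd y x * / Cx) with (distRd y x) by (field; lra).
    replace (1 / 2 * / Cx) with (/ (2 * Cx)) by (field; lra). lra. }
  assert (Hr : reach K x y (18 * Cx * distRd y x)).
  { intros s Hs. apply (chain_bound d K hK hconn x Cx Kx HCx Hm y Ky Hc s Hs). }
  assert (HL : 0 <= 18 * Cx * distRd y x) by (pose proof (dist_nonneg d y x); nra).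
  destruct (reach_path d K hK x y _ Kx Ky HL Hr) as [g [a [b [H1 [H2 [H3 [H4 H5]]]]]]].
  exists g, a, b. refine (conj H1 (conj H2 (conj H3 (conj H4 _)))). rewrite (dist_sym d x y). lra. Qed.
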